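(* Let $\Gamma$ be a connected $\mathbf{Top}$-graph with more than one vertex, let $T\subseteq\Gamma$ be a maximal tree, and let $v\in\Gamma_0$. Let $\Gamma/T$ be the quotient space of the edge space $\Gamma$ obtained by collapsing the (nonempty) edge set $T$ to a single point, taken as basepoint $\ast$. Then the vertex group $\mathscr F(\Gamma)(v)=\mathscr F(\Gamma)(v,v)$ of the free $\mathbf{Top}$-groupoid is isomorphic, as a topological group, to the free Graev topological group $F_G(\Gamma/T,\ast)$.
   Context: A $\mathbf{Top}$-graph $\Gamma$ consists of a discrete vertex space $\Gamma_0$, an edge space $\Gamma$ and continuous maps $\partial_0,\partial_1:\Gamma\to\Gamma_0$; $\Gamma(x,y)=\partial_0^{-1}(x)\cap\partial_1^{-1}(y)$. Its realization is $|\Gamma|=\Gamma_0\sqcup(\Gamma\times[0,1])/((\alpha,i)\sim\partial_i(\alpha))$; $\Gamma$ is connected if $|\Gamma|$ is path connected. A tree is a $\mathbf{Top}$-graph with discrete edge space and contractible realization; a maximal tree in $\Gamma$ is a sub-$\mathbf{Top}$-graph $T$ which is a tree with $T_0=\Gamma_0$. A $\mathbf{Top}$-groupoid is a groupoid with discrete object set, topologized hom-sets, and continuous composition and inversion. The free $\mathbf{Top}$-groupoid $\mathscr F(\Gamma)$ is the $\mathbf{Top}$-groupoid with objects $\Gamma_0$ and a $\mathbf{Top}$-graph morphism $\sigma:\Gamma\to\mathscr F(\Gamma)$ such that every $\mathbf{Top}$-graph morphism from $\Gamma$ into a $\mathbf{Top}$-groupoid extends uniquely to a functor $\mathscr F(\Gamma)\to\mathcal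 G$ continuous on hom-spaces. The free Graev topological group $F_G(X,\ast)$ is the topological group with continuous $\sigma_\ast:X\to F_G(X,\ast)$, $\sigma_\ast(\ast)=e$, universal for continuous based maps into topological groups. *)

(* Defs.v *)
From Stdlib Require Import Reals.
Set Implicit Arguments.
Open Scope R_scope.

Definition Opens (X : Type) := (X -> Prop) -> Prop.

Definition is_topology (X : Type) (O : Opens X) : Prop :=
  O (fun _ => True) /\
  (forall U V, O U -> O V -> O (fun x => U x /\ V x)) /\
  (forall F : (X -> Prop) -> Prop, (forall U, F U -> O U) ->
     O (fun x => exists U, F U /\ U x)).

Definition discrete_open (X : Type) : Opens X := fun _ => True.

Definition continuous (X Y : Type) (OX : Opens X) (OY : Opens Y) (f : X -> Y) : Prop :=
  forall V, OY V -> OX (fun x => V (f x)).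

Definition prod_open (X Y : Type) (OX : Opens X) (OY : Opens Y) : Opens (X * Y) :=
  fun W => forall p, W p -> exists U V, OX U /\ OY V /\ U (fst p) /\ V (snd p) /\
                     (forall a b, U a -> V b -> W (a, b)).

Definition sub_open (X : Type) (OX : Opens X) (P : X -> Prop) : Opens {x : X | P x} :=
  fun W => exists U, OX U /\ forall z : {x : X | P x}, W z <-> U (proj1_sig z).

Definition sum_open (X Y : Type) (OX : Opens X) (OY : Opens Y) : Opens (X + Y) :=
  fun W => OX (fun x => W (inl x)) /\ OY (fun y => W (inr y)).

Definition is_quotient_map (X Q : Type) (OX : Opens X) (OQ : Opens Q) (q : X -> Q) : Prop :=
  (forall y, exists x, q x = y) /\ (forall V, OQ V <-> OX (fun x => V (q x))).

Definition R_open : Opens R :=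
  fun U => forall x, U x -> exists e, 0 < e /\ forall y, Rabs (y - x) < e -> U y.

Definition unit_interval := {r : R | 0 <= r <= 1}.
Definition I_open : Opens unit_interval := @sub_open R R_open (fun r : R => 0 <= r <= 1).
Definition I0 : unit_interval := exist _ 0 (conj (Rle_refl 0) Rle_0_1).
Definition I1 : unit_interval := exist _ 1 (conj Rle_0_1 (Rle_refl 1)).

Definition path_connected (X : Type) (OX : Opens X) : Prop :=
  forall x y, exists g : unit_interval -> X,
    continuous I_open OX g /\ g I0 = x /\ g I1 = y.

Definition contractible (X : Type) (OX : Opens X) : Prop :=
  exists (x0 : X) (H : X * unit_interval -> X),
    continuous (prod_open OX I_open) OX H /\
    forall x, H (x, I0) = x /\ H (x, I1) = x0.

(** * Top-graphs: discrete vertex type V0, edge space E with topology OE,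
      continuous source/target maps d0 d1 : E -> V0. *)

Definition is_topgraph (V0 E : Type) (OE : Opens E) (d0 d1 : E -> V0) : Prop :=
  is_topology OE /\ continuous OE (@discrete_open V0) d0 /\
  continuous OE (@discrete_open V0) d1.

(* x is the vertex represented by a point of V0 ⊔ (E × [0,1]) *)
Definition real_vertex (V0 E : Type) (d0 d1 : E -> V0)
    (p : V0 + (E * unit_interval)) (x : V0) : Prop :=
  p = inl x \/
  exists a r, p = inr (a, r) /\
    ((proj1_sig r = 0 /\ d0 a = x) \/ (proj1_sig r = 1 /\ d1 a = x)).

(* the equivalence relation (α,i) ~ ∂_i(α) *)
Definition real_rel (V0 E : Type) (d0 d1 : E -> V0)
    (p p' : V0 + (E * unit_interval)) : Prop :=
  p = p' \/ exists x, real_vertex d0 d1 p x /\ real_vertex d0 d1 p' x.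

(* (Q, OQ, q) is a model of the realization |Γ| *)
Definition is_realization (V0 E : Type) (OE : Opens E) (d0 d1 : E -> V0)
    (Q : Type) (OQ : Opens Q) (q : V0 + (E * unit_interval) -> Q) : Prop :=
  is_quotient_map (sum_open (@discrete_open V0) (prod_open OE I_open)) OQ q /\
  forall p p', q p = q p' <-> real_rel d0 d1 p p'.

Definition graph_connected (V0 E : Type) (OE : Opens E) (d0 d1 : E -> V0) : Prop :=
  exists (Q : Type) (OQ : Opens Q) (q : V0 + (E * unit_interval) -> Q),
    is_realization OE d0 d1 OQ q /\ path_connected OQ.

(* T ⊆ E is a maximal tree: the sub-Top-graph with all vertices and edge
   set T (subspace topology) has discrete edge space and contractible
   realization. *)
Definition maximal_tree (V0 E : Type) (OE : Opens E) (d0 d1 : E -> V0)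
    (T : E -> Prop) : Prop :=
  (forall W, sub_open OE T W) /\
  exists (Q : Type) (OQ : Opens Q) (q : V0 + ({a : E | T a} * unit_interval) -> Q),
    is_realization (sub_open OE T) (fun a => d0 (proj1_sig a))
                   (fun a => d1 (proj1_sig a)) OQ q /\
    contractible OQ.

(** * Top-groupoids, given by the total space M of morphisms (topologized so
    that hom-spaces M(x,y) carry the subspace topology and are clopen),
    source s, target t, composition comp f g ("f then g", defined when
    t f = s g), identities idm and inverses inv. *)

Definition is_topgroupoid (O M : Type) (OM : Opens M) (s t : M -> O)
    (comp : M -> M -> M) (idm : O -> M) (inv : M -> M) : Prop :=
  is_topology OM /\
  continuous OM (@discrete_open O) s /\ continuous OM (@discrete_open O) t /\
  (forall x, s (idm x) = x /\ t (idm x) = x) /\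
  (forall f g, t f = s g -> s (comp f g) = s f /\ t (comp f g) = t g) /\
  (forall f g h, t f = s g -> t g = s h -> comp (comp f g) h = comp f (comp g h)) /\
  (forall f, comp (idm (s f)) f = f /\ comp f (idm (t f)) = f) /\
  (forall f, s (inv f) = t f /\ t (inv f) = s f /\
             comp f (inv f) = idm (s f) /\ comp (inv f) f = idm (t f)) /\
  continuous (sub_open (prod_open OM OM) (fun p => t (fst p) = s (snd p))) OM
             (fun p => comp (fst (proj1_sig p)) (snd (proj1_sig p))) /\
  continuous OM OM inv.

Definition graph_morphism (V0 E : Type) (OE : Opens E) (d0 d1 : E -> V0)
    (O' M' : Type) (OM' : Opens M') (s' t' : M' -> O')
    (fo : V0 -> O') (f : E -> M') : Prop :=
  continuous OE OM' f /\ (forall a, s' (f a) = fo (d0 a) /\ t' (f a) = fo (d1 a)).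

Definition is_functor (O M : Type) (s t : M -> O) (comp : M -> M -> M) (idm : O -> M)
    (O' M' : Type) (s' t' : M' -> O') (comp' : M' -> M' -> M') (idm' : O' -> M')
    (fo : O -> O') (F : M -> M') : Prop :=
  (forall m, s' (F m) = fo (s m) /\ t' (F m) = fo (t m)) /\
  (forall f g, t f = s g -> F (comp f g) = comp' (F f) (F g)) /\
  (forall x, F (idm x) = idm' (fo x)).

Definition is_free_topgroupoid (V0 E : Type) (OE : Opens E) (d0 d1 : E -> V0)
    (M : Type) (OM : Opens M) (s t : M -> V0) (comp : M -> M -> M)
    (idm : V0 -> M) (inv : M -> M) (sigma : E -> M) : Prop :=
  is_topgroupoid OM s t comp idm inv /\
  graph_morphism OE d0 d1 OM s t (fun x => x) sigma /\
  forall (O' M' : Type) (OM' : Opens M') (s' t' : M' -> O') (comp' : M' -> M' -> M')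
         (idm' : O' -> M') (inv' : M' -> M'),
    is_topgroupoid OM' s' t' comp' idm' inv' ->
    forall (fo : V0 -> O') (f : E -> M'),
      graph_morphism OE d0 d1 OM' s' t' fo f ->
      exists F : M -> M',
        is_functor s t comp idm s' t' comp' idm' fo F /\ continuous OM OM' F /\
        (forall a, F (sigma a) = f a) /\
        (forall F' : M -> M',
           is_functor s t comp idm s' t' comp' idm' fo F' -> continuous OM OM' F' ->
           (forall a, F' (sigma a) = f a) -> forall m, F' m = F m).

Definition is_topgroup (G : Type) (OG : Opens G) (mul : G -> G -> G) (inv : G -> G)
    (e : G) : Prop :=
  is_topology OG /\
  (forall x y z, mul (mul x y) z = mul x (mul y z)) /\
  (forall x, mul e x = x /\ mul x e = x) /\
  (forall x, mul x (inv x) = e /\ mul (inv x) x = e) /\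
  continuous (prod_open OG OG) OG (fun p => mul (fst p) (snd p)) /\
  continuous OG OG inv.

Definition group_hom (G H : Type) (mulG : G -> G -> G) (mulH : H -> H -> H)
    (phi : G -> H) : Prop :=
  forall x y, phi (mulG x y) = mulH (phi x) (phi y).

Definition is_free_graev (X : Type) (OX : Opens X) (star : X)
    (F : Type) (OF : Opens F) (mulF : F -> F -> F) (invF : F -> F) (eF : F)
    (sigma : X -> F) : Prop :=
  is_topgroup OF mulF invF eF /\ continuous OX OF sigma /\ sigma star = eF /\
  forall (H : Type) (OH : Opens H) (mulH : H -> H -> H) (invH : H -> H) (eH : H),
    is_topgroup OH mulH invH eH ->
    forall f : X -> H, continuous OX OH f -> f star = eH ->
      exists phi : F -> H,
        group_hom mulF mulH phi /\ continuous OF OH phi /\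
        (forall x, phi (sigma x) = f x) /\
        (forall phi' : F -> H, group_hom mulF mulH phi' -> continuous OF OH phi' ->
           (forall x, phi' (sigma x) = f x) -> forall y, phi' y = phi y).

Definition is_collapse (E : Type) (OE : Opens E) (T : E -> Prop)
    (Q : Type) (OQ : Opens Q) (q : E -> Q) : Prop :=
  is_quotient_map OE OQ q /\ forall a b, q a = q b <-> (a = b \/ (T a /\ T b)).

(* Main.v *)
Require Import Defs.
From Stdlib Require Import Reals Lra Lia Rtopology ClassicalEpsilon ProofIrrelevance List FunctionalExtensionality PropExtensionality.
Open Scope R_scope.


Definition ap (e a b : R) : Prop := exists k : Z, Rabs (a - b - IZR k) < e.
Definition zeq (a b : R) : Prop := exists k : Z, a - b = IZR k.
Definition inI (t : R) : Prop := 0 <= t <= 1.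
Definition contOn (a : R) (f : R -> R) := forall t, a <= t <= 1 -> forall e, 0 < e ->
  exists r, 0 < r /\ forall t', a <= t' <= 1 -> Rabs (t' - t) < r -> Rabs (f t' - f t) < e.
Definition contI f := contOn 0 f.
Definition mcontI (f : R -> R) := forall t, inI t -> forall e, 0 < e ->
  exists r, 0 < r /\ forall t', inI t' -> Rabs (t' - t) < r -> ap e (f t') (f t).

Lemma int_abs_lt1 (k : Z) : Rabs (IZR k) < 1 -> k = 0%Z.
Proof.
  intro H. assert (IZR (-1) < IZR k < IZR 1) by (simpl; split_Rabs; lra).
  destruct H0 as [H1 H2]. apply lt_IZR in H1. apply lt_IZR in H2. lia.
Qed.

Lemma ap_sym e a b : ap e a b -> ap e b a.
Proof. intros [k H]. exists (- k)%Z. rewrite opp_IZR.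
  replace (b - a - - IZR k) with (- (a - b - IZR k)) by ring. now rewrite Rabs_Ropp. Qed.

Lemma ap_trans e d a b c : ap e a b -> ap d b c -> ap (e + d) a c.
Proof. intros [k H] [j H']. exists (k + j)%Z. rewrite plus_IZR.
  replace (a - c - (IZR k + IZR j)) with ((a - b - IZR k) + (b - c - IZR j)) by ring.
  eapply Rle_lt_trans. apply Rabs_triang. lra. Qed.

Lemma ap_mono e d a b : e <= d -> ap e a b -> ap d a b.
Proof. intros H [k H']. exists k. lra. Qed.

Lemma ap_refl e a : 0 < e -> ap e a a.
Proof. intro. exists 0%Z. replace (a - a - IZR 0) with 0 by (simpl; ring). rewrite Rabs_R0; lra. Qed.

Lemma ap_zeq e a a' b b' : zeq a a' -> zeq b b' -> ap e a b -> ap e a' b'.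
Proof. intros [i Hi] [j Hj] [k Hk]. exists (k - i + j)%Z. rewrite plus_IZR, minus_IZR.
  replace (a' - b' - (IZR k - IZR i + IZR j)) with (a - b - IZR k) by (rewrite <- Hi, <- Hj; ring). auto. Qed.

Lemma ap_of_zeq e a b : 0 < e -> zeq a b -> ap e a b.
Proof. intros He [k H]. exists k. rewrite H. replace (IZR k - IZR k) with 0 by ring. rewrite Rabs_R0; lra. Qed.

Lemma ap_shift e a b c : ap e a b -> ap e (a - c) (b - c).
Proof. intros [k H]. exists k. replace (a - c - (b - c) - IZR k) with (a - b - IZR k) by ring. auto. Qed.

Lemma zeq_refl a : zeq a a.
Proof. exists 0%Z. simpl. ring. Qed.
Lemma zeq_sym a b : zeq a b -> zeq b a.
Proof. intros [k H]. exists (-k)%Z. rewrite opp_IZR. lra. Qed.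
Lemma zeq_trans a b c : zeq a b -> zeq b c -> zeq a c.
Proof. intros [k H] [j H']. exists (k + j)%Z. rewrite plus_IZR. lra. Qed.

Definition rnd (x : R) : Z := up (x - / 2).
Definition nr (x : R) : R := x - IZR (rnd x).

Lemma rnd_spec x k : Rabs (x - IZR k) < / 2 -> rnd x = k.
Proof. intro H. unfold rnd. symmetry. apply tech_up; split_Rabs; lra. Qed.

Lemma nr_spec x k : Rabs (x - IZR k) < / 2 -> nr x = x - IZR k.
Proof. intro H. unfold nr. now rewrite (rnd_spec x k H). Qed.

Lemma nr_close e x y : ap (/4) x 0 -> ap (/4) y 0 -> ap e y x -> e <= /4 ->
  Rabs (nr y - nr x) < e.
Proof.
  intros [i Hi] [j Hj] [k Hk] He. rewrite Rminus_0_r in Hi, Hj.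
  rewrite (nr_spec x i) by lra. rewrite (nr_spec y j) by lra.
  assert (Hm : (k + i - j)%Z = 0%Z).
  { apply int_abs_lt1. rewrite minus_IZR, plus_IZR.
    replace (IZR k + IZR i - IZR j) with ((y - IZR j) - (x - IZR i) - (y - x - IZR k)) by ring.
    split_Rabs; lra. }
  assert (IZR k = IZR j - IZR i).
  { assert (IZR (k + i - j) = 0) by (rewrite Hm; reflexivity).
    rewrite minus_IZR, plus_IZR in H. lra. }
  replace (y - IZR j - (x - IZR i)) with (y - x - IZR k) by lra. auto.
Qed.

Lemma nr0 : nr 0 = 0.
Proof. rewrite (nr_spec 0 0). simpl; ring. simpl. rewrite Rminus_0_r, Rabs_R0. lra. Qed.


Definition clamp (s : R) : R := Rmax 0 (Rmin s 1).
Lemma clamp_in s : inI (clamp s).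
Proof. unfold clamp, inI, Rmax, Rmin. repeat destruct Rle_dec; lra. Qed.
Lemma clamp_id s : inI s -> clamp s = s.
Proof. unfold clamp, inI, Rmax, Rmin. intro. repeat destruct Rle_dec; lra. Qed.
Lemma clamp_lip s s' : Rabs (clamp s - clamp s') <= Rabs (s - s').
Proof. unfold clamp, Rmax, Rmin. repeat destruct Rle_dec; split_Rabs; lra. Qed.

Lemma contI_continuity f : contI f -> continuity (fun s => f (clamp s)).
Proof.
  intros H s. unfold continuity_pt, continue_in, limit1_in, limit_in. simpl.
  intros e He. destruct (H (clamp s) (clamp_in s) e He) as [r [Hr H']].
  exists r; split; auto. intros x [_ Hx]. unfold R_dist in *.
  apply H'. apply clamp_in. eapply Rle_lt_trans; [apply clamp_lip| auto].
Qed.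

Lemma ivt_up f y : contI f -> f 0 < y -> y < f 1 -> exists t, inI t /\ f t = y.
Proof.
  intros Hc H0 H1.
  destruct (IVT (fun s => f (clamp s) - y) 0 1) as [z [Hz Hz']].
  - apply continuity_minus. now apply contI_continuity. apply continuity_const. now intros ? ?.
  - lra.
  - rewrite clamp_id by (unfold inI; lra). lra.
  - rewrite clamp_id by (unfold inI; lra). lra.
  - exists z. split. exact Hz. rewrite clamp_id in Hz' by exact Hz. lra.
Qed.

Lemma ivt_down f y : contI f -> f 1 < y -> y < f 0 -> exists t, inI t /\ f t = y.
Proof.
  intros Hc H0 H1.
  destruct (ivt_up (fun s => - f s) (- y)) as [t [Ht Ht']].
  - intros t Ht e He. destruct (Hc t Ht e He) as [r [Hr H]]. exists r; split; auto.
    intros. replace (- f t' - - f t) with (- (f t' - f t)) by ring. rewrite Rabs_Ropp. auto.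
  - lra. - lra.
  - exists t. split; auto. lra.
Qed.

Lemma int_const f : contI f -> (forall t, inI t -> exists k, f t = IZR k) -> f 0 = f 1.
Proof.
  intros Hc Hi.
  assert (I0' : inI 0) by (unfold inI; lra). assert (I1' : inI 1) by (unfold inI; lra).
  destruct (Hi 0 I0') as [k0 H0]. destruct (Hi 1 I1') as [k1 H1].
  destruct (Rtotal_order (f 0) (f 1)) as [H|[H|H]]; auto; exfalso.
  - rewrite H0, H1 in H. apply lt_IZR in H. assert (IZR (k0 + 1) <= IZR k1) by (apply IZR_le; lia).
    rewrite plus_IZR in H2.
    destruct (ivt_up f (IZR k0 + /2) Hc) as [t [Ht Ht']]; try lra.
    destruct (Hi t Ht) as [k Hk]. rewrite Hk in Ht'.
    assert (IZR k0 < IZR k) by lra. assert (IZR k < IZR (k0 + 1)) by (rewrite plus_IZR; lra).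
    apply lt_IZR in H3. apply lt_IZR in H4. lia.
  - rewrite H0, H1 in H. apply lt_IZR in H. assert (IZR (k1 + 1) <= IZR k0) by (apply IZR_le; lia).
    rewrite plus_IZR in H2.
    destruct (ivt_down f (IZR k1 + /2) Hc) as [t [Ht Ht']]; try lra.
    destruct (Hi t Ht) as [k Hk]. rewrite Hk in Ht'.
    assert (IZR k1 < IZR k) by lra. assert (IZR k < IZR (k1 + 1)) by (rewrite plus_IZR; lra).
    apply lt_IZR in H3. apply lt_IZR in H4. lia.
Qed.

Lemma not_ap_half e y : e <= /4 -> Rabs y = /2 -> ~ ap e y 0.
Proof.
  intros He Hy [j Hj]. rewrite Rminus_0_r in Hj.
  assert (Hj' : Rabs (IZR j) < 1 \/ 1 <= Rabs (IZR j)) by lra.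
  destruct Hj' as [Hj'|Hj'].
  - apply int_abs_lt1 in Hj'. subst. simpl in Hj. rewrite Rminus_0_r in Hj. lra.
  - split_Rabs; lra.
Qed.

Lemma small_lemma D e : contI D -> 0 < e -> e <= /4 -> (forall t, inI t -> ap e (D t) 0) ->
  D 1 = 0 -> Rabs (D 0) < e.
Proof.
  intros Hc He He4 Ha H1.
  assert (I0' : inI 0) by (unfold inI; lra).
  destruct (Ha 0 I0') as [k Hk]. rewrite Rminus_0_r in Hk.
  destruct (Z.eq_dec k 0) as [->|Hn].
  - simpl in Hk. rewrite Rminus_0_r in Hk. auto.
  - exfalso. destruct (Z.ltb_spec k 0) as [Hl|Hl].
    + assert (IZR k <= IZR (-1)) by (apply IZR_le; lia). simpl in H.
      destruct (ivt_up D (- / 2) Hc) as [t [Ht Ht']]; try (split_Rabs; lra).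
      apply (not_ap_half e (D t) He4). rewrite Ht'. split_Rabs; lra. auto.
    + assert (IZR 1 <= IZR k) by (apply IZR_le; lia). simpl in H.
      destruct (ivt_down D (/ 2) Hc) as [t [Ht Ht']]; try (split_Rabs; lra).
      apply (not_ap_half e (D t) He4). rewrite Ht'. split_Rabs; lra. auto.
Qed.


Lemma fin_cover (P : R -> R -> Prop) :
  (forall t, inI t -> exists r, 0 < r /\ P t r) ->
  exists l : list (R * R),
    (forall p, In p l -> inI (fst p) /\ 0 < snd p /\ P (fst p) (snd p)) /\
    (forall s, inI s -> exists p, In p l /\ Rabs (s - fst p) < snd p / 2).
Proof.
  intros HP.
  set (rho := fun t => match excluded_middle_informative (inI t) with
                       | left H => proj1_sig (constructive_indefinite_description _ (HP t H))
                       | right _ => 1 end).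
  assert (Hrho : forall t, inI t -> 0 < rho t /\ P t (rho t)).
  { intros t Ht. unfold rho. destruct excluded_middle_informative as [H|H]; [|contradiction].
    apply (proj2_sig (constructive_indefinite_description _ (HP t H))). }
  assert (Hc : forall x, (exists y, (fun t s => inI t /\ Rabs (s - t) < rho t / 2) x y) -> inI x).
  { intros x [y [Hy _]]. exact Hy. }
  set (fam := mkfamily inI (fun t s => inI t /\ Rabs (s - t) < rho t / 2) Hc).
  destruct (compact_P3 0 1 fam) as [D [Hcov Hfin]].
  - split.
    + intros s Hs. exists s. simpl. split; auto. replace (s - s) with 0 by ring.
      rewrite Rabs_R0. destruct (Hrho s Hs). lra.
    + intros t s [Ht Hs]. destruct (Hrho t Ht) as [Hr _].
      assert (Hd : 0 < rho t / 2 - Rabs (s - t)) by lra.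
      exists (mkposreal _ Hd). intros y Hy. unfold disc in Hy. simpl in Hy. split; auto.
      split_Rabs; lra.
  - destruct Hfin as [l0 Hl0].
    exists (map (fun t => (t, rho t)) l0). split.
    + intros p Hp. apply in_map_iff in Hp. destruct Hp as [t [<- Ht]]. simpl.
      apply Hl0 in Ht. destruct Ht as [Ht _]. destruct (Hrho t Ht). auto.
    + intros s Hs. destruct (Hcov s Hs) as [y [[Hy1 Hy2] Hy3]].
      exists (y, rho y). split; auto. apply in_map_iff. exists y. split; auto.
      apply Hl0. split; auto.
Qed.

Lemma list_min (l : list (R * R)) : (forall p, In p l -> 0 < snd p) ->
  exists m, 0 < m /\ forall p, In p l -> m <= snd p.
Proof.
  induction l as [|p l IH]; intro H.
  - exists 1. split. lra. intros p [].
  - destruct IH as [m [Hm Hm']]. intros q Hq. apply H. right. auto.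
    exists (Rmin m (snd p)). split. apply Rmin_glb_lt; auto. apply H. left; auto.
    intros q [<-|Hq]. apply Rmin_r. eapply Rle_trans. apply Rmin_l. auto.
Qed.

Lemma unif_mcont f e : mcontI f -> 0 < e -> exists d, 0 < d /\
  forall s s', inI s -> inI s' -> Rabs (s - s') < d -> ap (e + e) (f s) (f s').
Proof.
  intros Hf He.
  destruct (fin_cover (fun t r => forall t', inI t' -> Rabs (t' - t) < r -> ap e (f t') (f t)))
    as [l [Hl Hcov]].
  { intros t Ht. apply Hf; auto. }
  destruct (list_min l) as [m [Hm Hm']]. { intros p Hp. apply Hl; auto. }
  exists (m / 2). split. lra.
  intros s s' Hs Hs' Hss. destruct (Hcov s Hs) as [p [Hp Hsp]].
  destruct (Hl p Hp) as [_ [Hpos HP]]. specialize (Hm' p Hp).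
  apply ap_trans with (f (fst p)). apply HP; auto; lra.
  apply ap_sym. apply HP; auto. split_Rabs; lra.
Qed.

Definition isLift (k : R -> R) (c : R) (L : R -> R) : Prop :=
  contI L /\ (forall t, inI t -> zeq (L t) (k t)) /\ L 1 = c.

Lemma lift_exists k c : mcontI k -> zeq c (k 1) -> exists L, isLift k c L.
Proof.
  intros Hk Hc.
  destruct (unif_mcont k (/8) Hk) as [d [Hd Hdk]]. lra.
  replace (/8 + /8) with (/4) in Hdk by field.
  set (st := d / 2).
  assert (Hst : 0 < st) by (unfold st; lra).
  assert (Main : forall n : nat, let a := Rmax 0 (1 - INR n * st) in
     exists L, contOn a L /\ (forall t, a <= t <= 1 -> zeq (L t) (k t)) /\ L 1 = c).
  { induction n as [|n IH]; intro a.
    - assert (Ha : a = 1) by (unfold a; simpl; rewrite Rmult_0_l, Rminus_0_r; apply Rmax_right; lra).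
      exists (fun _ => c). split; [|split].
      + intros t Ht e He. exists 1. split. lra. intros. rewrite Rminus_diag, Rabs_R0. auto.
      + intros t Ht. assert (t = 1) by lra. subst. auto.
      + auto.
    - set (a0 := Rmax 0 (1 - INR n * st)) in IH.
      destruct IH as [L [HLc [HLz HL1]]].
      assert (Ha1 : a <= a0).
      { unfold a, a0. rewrite S_INR. unfold Rmax. repeat destruct Rle_dec; lra. }
      assert (Ha2 : a0 - a <= st).
      { unfold a, a0. rewrite S_INR. unfold Rmax. repeat destruct Rle_dec; lra. }
      assert (Ha0 : 0 <= a) by (unfold a; apply Rmax_l).
      assert (Ha01 : a0 <= 1).
      { unfold a0. unfold Rmax. destruct Rle_dec. pose proof (pos_INR n). nra. lra. }
      assert (Hnear : forall t, a <= t <= a0 -> ap (/4) (k t - k a0) 0).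
      { intros t Ht. assert (HH : ap (/4) (k t) (k a0)).
        { apply Hdk. unfold inI; lra. unfold inI; lra. unfold st in *. split_Rabs; lra. }
        apply (ap_shift _ _ _ (k a0)) in HH.
        replace (k a0 - k a0) with 0 in HH by ring. exact HH. }
      exists (fun t => if Rle_dec a0 t then L t else L a0 + nr (k t - k a0)).
      split; [|split].
      + intros t Ht e He.
        destruct (Rtotal_order t a0) as [Hlt|[Heq|Hgt]].
        * destruct (Hk t (conj (Rle_trans _ _ _ Ha0 (proj1 Ht)) (proj2 Ht)) (Rmin e (/4)))
            as [r [Hr Hr']]. { apply Rmin_glb_lt; lra. }
          exists (Rmin r (a0 - t)). split. apply Rmin_glb_lt; lra.
          intros t' Ht' Htt.
          assert (t' < a0) by (pose proof (Rmin_r r (a0 - t)); split_Rabs; lra).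
          destruct (Rle_dec a0 t') as [|_]; [lra|]. destruct (Rle_dec a0 t) as [|_]; [lra|].
          replace (L a0 + nr (k t' - k a0) - (L a0 + nr (k t - k a0)))
            with (nr (k t' - k a0) - nr (k t - k a0)) by ring.
          eapply Rlt_le_trans; [|apply (Rmin_l e (/4))].
          apply nr_close. apply Hnear; lra. apply Hnear; lra.
          apply ap_shift. apply Hr'. unfold inI; lra. pose proof (Rmin_l r (a0 - t)). lra.
          apply Rmin_r.
        * subst t. destruct (HLc a0 (conj (Rle_refl _) Ha01) e He) as [r1 [Hr1 Hr1']].
          assert (Ia0 : inI a0) by (unfold inI; lra).
          destruct (Hk a0 Ia0 (Rmin e (/4))) as [r2 [Hr2 Hr2']]. { apply Rmin_glb_lt; lra. }
          exists (Rmin r1 r2). split. apply Rmin_glb_lt; lra.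
          intros t' Ht' Htt. destruct (Rle_dec a0 a0) as [_|]; [|lra].
          pose proof (Rmin_l r1 r2). pose proof (Rmin_r r1 r2).
          destruct (Rle_dec a0 t').
          -- apply Hr1'. lra. lra.
          -- replace (L a0 + nr (k t' - k a0) - L a0) with (nr (k t' - k a0) - nr (k a0 - k a0))
               by (rewrite Rminus_diag, nr0; ring).
             eapply Rlt_le_trans; [|apply (Rmin_l e (/4))].
             apply nr_close. apply Hnear; lra. apply Hnear; lra.
             apply ap_shift. apply Hr2'. unfold inI; lra. lra. apply Rmin_r.
        * destruct (HLc t (conj (Rlt_le _ _ Hgt) (proj2 Ht)) e He) as [r [Hr Hr']].
          exists (Rmin r (t - a0)). split. apply Rmin_glb_lt; lra.
          intros t' Ht' Htt. pose proof (Rmin_l r (t - a0)). pose proof (Rmin_r r (t - a0)).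
          destruct (Rle_dec a0 t') as [|]; [|split_Rabs; lra].
          destruct (Rle_dec a0 t) as [|]; [|lra].
          apply Hr'. lra. lra.
      + intros t Ht. destruct (Rle_dec a0 t) as [H|H]. apply HLz; lra.
        destruct (Hnear t) as [j Hj]. lra. rewrite Rminus_0_r in Hj.
        rewrite (nr_spec _ j) by lra.
        destruct (HLz a0) as [i Hi]. lra.
        exists (i - j)%Z. rewrite minus_IZR. lra.
      + destruct (Rle_dec a0 1); [auto|lra]. }
  destruct (archimed (/ st)) as [Hup _].
  set (n := Z.to_nat (up (/ st))).
  destruct (Main n) as [L [HL1 [HL2 HL3]]].
  assert (Hz : Rmax 0 (1 - INR n * st) = 0).
  { apply Rmax_left. unfold n. rewrite INR_IZR_INZ, Znat.Z2Nat.id.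
    2:{ apply le_IZR. pose proof (Rinv_0_lt_compat st Hst). lra. }
    assert (1 <= IZR (up (/ st)) * st).
    { replace 1 with (/ st * st) by (field; lra). apply Rmult_le_compat_r; lra. }
    lra. }
  rewrite Hz in HL1, HL2. exists L. split; [exact HL1|split; auto].
Qed.


Lemma ui_eq (a b : unit_interval) : proj1_sig a = proj1_sig b -> a = b.
Proof. destruct a as [a Ha], b as [b Hb]. simpl. intro; subst. f_equal. apply proof_irrelevance. Qed.

Definition clampI (s : R) : unit_interval := exist _ (clamp s) (clamp_in s).
Lemma clampI_val s : inI s -> proj1_sig (clampI s) = s.
Proof. intro. simpl. now apply clamp_id. Qed.
Lemma clampI0 : clampI 0 = I0.
Proof. apply ui_eq. simpl. apply clamp_id. unfold inI; lra. Qed.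
Lemma clampI1 : clampI 1 = I1.
Proof. apply ui_eq. simpl. apply clamp_id. unfold inI; lra. Qed.

Lemma ball_I_open (c rho : R) : I_open (fun r : unit_interval => Rabs (proj1_sig r - c) < rho).
Proof.
  exists (fun y => Rabs (y - c) < rho). split; [|intro; tauto].
  intros x Hx. exists (rho - Rabs (x - c)). split. lra. intros y Hy. split_Rabs; lra.
Qed.

Lemma I_open_ball (V : unit_interval -> Prop) r : I_open V -> V r ->
  exists rho, 0 < rho /\ forall r', Rabs (proj1_sig r' - proj1_sig r) < rho -> V r'.
Proof.
  intros [U [HU HUV]] Hr. apply HUV in Hr. destruct (HU _ Hr) as [e [He He']].
  exists e. split; auto. intros r' Hr'. apply HUV. apply He'. auto.
Qed.

Lemma contI_minus f g : contI f -> contI g -> contI (fun s => f s - g s).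
Proof.
  intros Hf Hg t Ht e He.
  destruct (Hf t Ht (e/2)) as [r1 [Hr1 H1]]. lra.
  destruct (Hg t Ht (e/2)) as [r2 [Hr2 H2]]. lra.
  exists (Rmin r1 r2). split. apply Rmin_glb_lt; auto.
  intros t' Ht' Htt. pose proof (Rmin_l r1 r2). pose proof (Rmin_r r1 r2).
  specialize (H1 t' Ht'). specialize (H2 t' Ht').
  replace (f t' - g t' - (f t - g t)) with ((f t' - f t) - (g t' - g t)) by ring.
  assert (Rabs (f t' - f t) < e/2) by (apply H1; lra).
  assert (Rabs (g t' - g t) < e/2) by (apply H2; lra).
  split_Rabs; lra.
Qed.

Definition dsrc {V0 E : Type} (d0 d1 : E -> V0) (d : E * bool) : V0 :=
  if snd d then d0 (fst d) else d1 (fst d).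
Definition dtgt {V0 E : Type} (d0 d1 : E -> V0) (d : E * bool) : V0 :=
  if snd d then d1 (fst d) else d0 (fst d).

Fixpoint walk {V0 E : Type} (T : E -> Prop) (d0 d1 : E -> V0) (x y : V0)
    (l : list (E * bool)) : Prop :=
  match l with
  | nil => x = y
  | d :: l' => T (fst d) /\ dsrc d0 d1 d = x /\ walk T d0 d1 (dtgt d0 d1 d) y l'
  end.

Lemma walk_app {V0 E : Type} (T : E -> Prop) (d0 d1 : E -> V0) x y z l1 l2 :
  walk T d0 d1 x y l1 -> walk T d0 d1 y z l2 -> walk T d0 d1 x z (l1 ++ l2).
Proof.
  revert x. induction l1 as [|d l IH]; simpl; intros x H1 H2.
  - now subst. - destruct H1 as [? [? ?]]. split; auto.
Qed.

Section Tree.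
Variables (V0 E : Type) (OE : Opens E) (d0 d1 : E -> V0) (T : E -> Prop).
Hypothesis Hdisc : forall W, sub_open OE T W.
Let ET := {a : E | T a}.
Variables (QT : Type) (OT : Opens QT) (qT : V0 + (ET * unit_interval) -> QT).
Hypothesis Hreal : is_realization (sub_open OE T) (fun a => d0 (proj1_sig a))
                   (fun a => d1 (proj1_sig a)) OT qT.
Variables (x0 : QT) (H : QT * unit_interval -> QT).
Hypothesis HH : continuous (prod_open OT I_open) OT H.
Hypothesis Hends : forall x, H (x, I0) = x /\ H (x, I1) = x0.

Lemma q_v0 (a : ET) r : proj1_sig r = 0 -> qT (inr (a, r)) = qT (inl (d0 (proj1_sig a))).
Proof.
  intro Hr. apply (proj2 Hreal). right. exists (d0 (proj1_sig a)). split.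
  - right. exists a, r. split; auto. - left; auto.
Qed.
Lemma q_v1 (a : ET) r : proj1_sig r = 1 -> qT (inr (a, r)) = qT (inl (d1 (proj1_sig a))).
Proof.
  intro Hr. apply (proj2 Hreal). right. exists (d1 (proj1_sig a)). split.
  - right. exists a, r. split; auto. - left; auto.
Qed.

Lemma open_of_edges (V : QT -> Prop) :
  (forall a r, V (qT (inr (a, r))) -> exists rho, 0 < rho /\
     forall r', Rabs (proj1_sig r' - proj1_sig r) < rho -> V (qT (inr (a, r')))) -> OT V.
Proof.
  intro HV. apply (proj2 (proj1 Hreal)). split; [exact I|].
  intros [a r] Hp. simpl in Hp. destruct (HV a r Hp) as [rho [Hrho Hb]].
  exists (fun b => b = a), (fun r' => Rabs (proj1_sig r' - proj1_sig r) < rho).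
  split; [apply Hdisc|]. split; [apply ball_I_open|]. simpl. split; auto.
  split. rewrite Rminus_diag, Rabs_R0; auto. intros b r' -> Hr'. apply Hb; auto.
Qed.

Lemma edge_nbhd (V : QT -> Prop) a r : OT V -> V (qT (inr (a, r))) -> exists rho, 0 < rho /\
     forall r', Rabs (proj1_sig r' - proj1_sig r) < rho -> V (qT (inr (a, r'))).
Proof.
  intros HV Hp. apply (proj2 (proj1 Hreal) V) in HV. destruct HV as [_ HV].
  destruct (HV (a, r) Hp) as [U [W [_ [HW [HUa [HWr Hall]]]]]].
  simpl in *. destruct (I_open_ball W r HW HWr) as [rho [Hrho Hb]].
  exists rho. split; [exact Hrho|]. intros r' Hr'. apply (Hall a r' HUa). auto.
Qed.

Lemma H_nbhd (P : QT -> Prop) z t : OT P -> inI t -> P (H (z, clampI t)) ->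
  exists U rho, OT U /\ U z /\ 0 < rho /\
    forall z' t', U z' -> inI t' -> Rabs (t' - t) < rho -> P (H (z', clampI t')).
Proof.
  intros HP Ht Hz. destruct (HH P HP (z, clampI t) Hz) as [U [V [HU [HV [HUz [HVt Hall]]]]]].
  simpl in *. destruct (I_open_ball V _ HV HVt) as [rho [Hrho Hb]].
  exists U, rho. repeat split; auto. intros z' t' Hz' Ht' Htt. apply Hall; auto.
  apply Hb. rewrite !clampI_val; auto.
Qed.

Lemma real_vertex_01 (p : V0 + (ET * unit_interval)) a r x : p = inr (a, r) ->
  real_vertex (fun a => d0 (proj1_sig a)) (fun a => d1 (proj1_sig a)) p x ->
  proj1_sig r = 0 \/ proj1_sig r = 1.
Proof.
  intros -> [Hp|[b [s [Hp [[Hs _]|[Hs _]]]]]]; [discriminate| |];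
  injection Hp; intros; subst; auto.
Qed.

Lemma tree_connected (v : V0) : forall x, exists l, walk T d0 d1 v x l.
Proof.
  set (reach := fun y => exists l, walk T d0 d1 v y l).
  assert (Hedge : forall a : ET, reach (d0 (proj1_sig a)) <-> reach (d1 (proj1_sig a))).
  { intros [a Ha]. simpl. split; intros [l Hl].
    - exists (l ++ (a, true) :: nil). eapply walk_app; eauto. simpl. auto.
    - exists (l ++ (a, false) :: nil). eapply walk_app; eauto. simpl. auto. }
  set (good := fun p : V0 + (ET * unit_interval) =>
         match p with inl y => reach y | inr (a, _) => reach (d0 (proj1_sig a)) end).
  assert (Hvx : forall p x, real_vertex (fun a => d0 (proj1_sig a)) (fun a => d1 (proj1_sig a)) p x ->
              (good p <-> reach x)).
  { intros p x [->|[a [r [-> [[_ Hd]|[_ Hd]]]]]]; simpl; try tauto.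
    - subst; tauto. - subst. apply Hedge. }
  set (S := fun z => exists p, qT p = z /\ good p).
  assert (HS : forall p, S (qT p) <-> good p).
  { intros p. split. 2:{ intro; exists p; auto. }
    intros [p' [Hq Hg]]. apply (proj2 Hreal) in Hq. destruct Hq as [<-|[x [H1 H2]]]; auto.
    apply (Hvx p x H2). apply (Hvx p' x H1). auto. }
  assert (OS : OT S).
  { apply open_of_edges. intros a r Ha. exists 1. split. lra. intros r' _.
    apply HS. apply HS in Ha. exact Ha. }
  assert (OnS : OT (fun z => ~ S z)).
  { apply open_of_edges. intros a r Ha. exists 1. split. lra. intros r' _.
    rewrite HS. rewrite HS in Ha. exact Ha. }
  assert (Key : forall z, S z <-> S x0).
  { intro z.
    set (phi := fun s => if excluded_middle_informative (S (H (z, clampI s))) then 1 else 0).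
    assert (Hc : contI phi).
    { intros t Ht e He. unfold phi at 2.
      destruct (excluded_middle_informative (S (H (z, clampI t)))) as [Hs|Hs].
      - destruct (H_nbhd S z t OS Ht Hs) as [U [rho [_ [HUz [Hrho Hb]]]]].
        exists rho. split; auto. intros t' Ht' Htt. unfold phi.
        destruct excluded_middle_informative as [_|Hn]. rewrite Rminus_diag, Rabs_R0; auto.
        exfalso. apply Hn. apply Hb; auto.
      - destruct (H_nbhd _ z t OnS Ht Hs) as [U [rho [_ [HUz [Hrho Hb]]]]].
        exists rho. split; auto. intros t' Ht' Htt. unfold phi.
        destruct excluded_middle_informative as [Hy|_]. exfalso. apply (Hb z t'); auto.
        rewrite Rminus_diag, Rabs_R0; auto. }
    assert (Hint : forall t, inI t -> exists k, phi t = IZR k).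
    { intros t _. unfold phi. destruct excluded_middle_informative. exists 1%Z; auto. exists 0%Z; auto. }
    pose proof (int_const phi Hc Hint) as E01. unfold phi in E01.
    rewrite clampI0, clampI1, (proj1 (Hends z)), (proj2 (Hends z)) in E01.
    destruct (excluded_middle_informative (S z)), (excluded_middle_informative (S x0));
      try tauto; lra. }
  intro x. assert (Sv : S (qT (inl v))). { apply HS. exists nil. simpl. auto. }
  assert (Sx : S (qT (inl x))) by (apply Key; apply (Key (qT (inl v))); exact Sv).
  apply HS in Sx. exact Sx.
Qed.

Section Pot.
Variables (e : E) (He : T e).
Let eh : ET := exist _ e He.

Definition uu (z : QT) : R :=
  match excluded_middle_informative (exists r : unit_interval, qT (inr (eh, r)) = z) with
  | left P => proj1_sig (proj1_sig (constructive_indefinite_description _ P))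
  | right _ => 0 end.

Lemma zeq01 a b : (a = 0 \/ a = 1) -> (b = 0 \/ b = 1) -> zeq a b.
Proof.
  intros [->| ->] [->| ->]. exists 0%Z; simpl; ring. exists (-1)%Z; simpl; ring.
  exists 1%Z; simpl; ring. exists 0%Z; simpl; ring.
Qed.

Lemma uu_e r : zeq (uu (qT (inr (eh, r)))) (proj1_sig r).
Proof.
  unfold uu. destruct excluded_middle_informative as [P|P].
  - destruct (constructive_indefinite_description _ P) as [r' Hr']. simpl.
    apply (proj2 Hreal) in Hr'. destruct Hr' as [Hr'|[x [H1 H2]]].
    + injection Hr'. intros ->. apply zeq_refl.
    + apply zeq01. eapply real_vertex_01; eauto. eapply real_vertex_01; eauto.
  - exfalso. apply P. exists r. auto.
Qed.

Lemma uu_ne (a : ET) r : a <> eh -> zeq (uu (qT (inr (a, r)))) 0.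
Proof.
  intro Ha. unfold uu. destruct excluded_middle_informative as [P|P].
  - destruct (constructive_indefinite_description _ P) as [r' Hr']. simpl.
    apply (proj2 Hreal) in Hr'. destruct Hr' as [Hr'|[x [H1 H2]]].
    + injection Hr'. intros _ ->. contradiction.
    + apply zeq01. eapply real_vertex_01; eauto. auto.
  - apply zeq_refl.
Qed.

Lemma uu_open z eps : 0 < eps -> OT (fun z' => ap eps (uu z') (uu z)).
Proof.
  intro Heps. apply open_of_edges. intros a r Har.
  destruct (classic (a = eh)) as [->|Hne].
  - apply (ap_zeq _ _ (proj1_sig r) _ (uu z)) in Har; [|apply uu_e|apply zeq_refl].
    destruct Har as [k Hk].
    exists (eps - Rabs (proj1_sig r - uu z - IZR k)). split. lra.
    intros r' Hr'. apply (ap_zeq _ (proj1_sig r') _ (uu z)).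
    apply zeq_sym, uu_e. apply zeq_refl. exists k. split_Rabs; lra.
  - exists 1. split. lra. intros r' _. eapply ap_zeq; [| |exact Har].
    apply (zeq_trans _ 0). apply uu_ne; auto. apply zeq_sym, uu_ne; auto.
    apply zeq_refl.
Qed.

Definition kap (z : QT) (s : R) : R := uu (H (z, clampI s)).

Lemma kap_mcont z : mcontI (kap z).
Proof.
  intros t Ht eps Heps.
  destruct (H_nbhd (fun y => ap eps (uu y) (uu (H (z, clampI t)))) z t (uu_open _ _ Heps) Ht
     (ap_refl _ _ Heps)) as [U [rho [_ [HUz [Hrho Hb]]]]].
  exists rho. split; auto. intros t' Ht' Htt. apply (Hb z t'); auto.
Qed.

Lemma kap1 z : kap z 1 = uu x0.
Proof. unfold kap. rewrite clampI1, (proj2 (Hends z)). auto. Qed.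
Lemma kap0 z : kap z 0 = uu z.
Proof. unfold kap. rewrite clampI0, (proj1 (Hends z)). auto. Qed.

Definition LiftF (k : R -> R) : R -> R :=
  match excluded_middle_informative (exists L, isLift k (uu x0) L) with
  | left P => proj1_sig (constructive_indefinite_description _ P)
  | right _ => fun _ => 0 end.

Lemma LiftF_spec z : isLift (kap z) (uu x0) (LiftF (kap z)).
Proof.
  unfold LiftF. destruct excluded_middle_informative as [P|P].
  - apply (proj2_sig (constructive_indefinite_description _ P)).
  - exfalso. apply P. apply lift_exists. apply kap_mcont. rewrite kap1. apply zeq_refl.
Qed.

Definition hpot (x : V0) : R := LiftF (kap (qT (inl x))) 0.

Section Edge.
Variable (a : ET).
Let zr (r : R) : QT := qT (inr (a, clampI r)).

Lemma kc2 r t eps : inI r -> inI t -> 0 < eps -> exists rho, 0 < rho /\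
  forall r' t', inI r' -> inI t' -> Rabs (r' - r) < rho -> Rabs (t' - t) < rho ->
    ap eps (kap (zr r') t') (kap (zr r) t).
Proof.
  intros Hr Ht Heps.
  destruct (H_nbhd (fun y => ap eps (uu y) (uu (H (zr r, clampI t)))) (zr r) t (uu_open _ _ Heps) Ht
     (ap_refl _ _ Heps)) as [U [rho [HU [HUz [Hrho Hb]]]]].
  destruct (edge_nbhd U a (clampI r) HU HUz) as [rho1 [Hrho1 Hb1]].
  exists (Rmin rho rho1). split. apply Rmin_glb_lt; auto.
  intros r' t' Hr' Ht' Hrr Htt. pose proof (Rmin_l rho rho1). pose proof (Rmin_r rho rho1).
  apply Hb; auto. apply Hb1. rewrite !clampI_val by auto. lra. lra.
Qed.

Lemma tube r eps : inI r -> 0 < eps -> exists rho, 0 < rho /\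
  forall r', inI r' -> Rabs (r' - r) < rho -> forall s, inI s ->
    ap (eps + eps) (kap (zr r') s) (kap (zr r) s).
Proof.
  intros Hr Heps.
  destruct (fin_cover (fun t rho => forall r' t', inI r' -> inI t' -> Rabs (r' - r) < rho ->
      Rabs (t' - t) < rho -> ap eps (kap (zr r') t') (kap (zr r) t))) as [l [Hl Hcov]].
  { intros t Ht. apply kc2; auto. }
  destruct (list_min l) as [m [Hm Hm']]. { intros p Hp. apply Hl; auto. }
  exists (m / 2). split. lra. intros r' Hr' Hrr s Hs.
  destruct (Hcov s Hs) as [p [Hp Hsp]]. destruct (Hl p Hp) as [Hpt [Hpos HP]].
  specialize (Hm' p Hp).
  apply ap_trans with (kap (zr r) (fst p)). apply HP; auto; lra.
  apply ap_sym. apply HP; auto. rewrite Rminus_diag, Rabs_R0. lra. lra.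
Qed.

Definition gg (r : R) : R := LiftF (kap (zr r)) 0.

Lemma gg_cont : contI gg.
Proof.
  intros r Hr eps Heps.
  set (eps' := Rmin eps (/4) / 2).
  assert (Heps' : 0 < eps').
  { unfold eps'. assert (0 < Rmin eps (/4)) by (apply Rmin_glb_lt; lra). lra. }
  destruct (tube r eps' Hr Heps') as [rho [Hrho Hb]].
  exists rho. split; auto. intros r' Hr' Hrr.
  destruct (LiftF_spec (zr r')) as [C1 [Z1 E1]].
  destruct (LiftF_spec (zr r)) as [C2 [Z2 E2]].
  pose proof (Rmin_l eps (/4)). pose proof (Rmin_r eps (/4)).
  assert (Hs : Rabs ((fun s => LiftF (kap (zr r')) s - LiftF (kap (zr r)) s) 0) < eps' + eps').
  { apply (small_lemma (fun s => LiftF (kap (zr r')) s - LiftF (kap (zr r)) s)).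
    apply contI_minus; auto. lra. unfold eps'; lra.
    intros s Hs. simpl. specialize (Hb r' Hr' Hrr s Hs).
    apply (ap_shift _ _ _ (kap (zr r) s)) in Hb. rewrite Rminus_diag in Hb.
    eapply ap_zeq; [| |exact Hb].
    destruct (Z1 s Hs) as [i Hi]. destruct (Z2 s Hs) as [j Hj]. exists (j - i)%Z.
    rewrite minus_IZR. lra. apply zeq_refl.
    simpl. rewrite E1, E2. ring. }
  unfold gg. simpl in Hs. unfold eps' in Hs. lra.
Qed.

Lemma gg_zeq r : inI r -> zeq (gg r) (uu (zr r)).
Proof.
  intro Hr. destruct (LiftF_spec (zr r)) as [_ [Z _]]. unfold gg.
  rewrite <- kap0. apply Z. unfold inI; lra.
Qed.

Lemma gg0 : gg 0 = hpot (d0 (proj1_sig a)).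
Proof. unfold gg, hpot, zr. rewrite (q_v0 a). auto. apply clampI_val. unfold inI; lra. Qed.
Lemma gg1 : gg 1 = hpot (d1 (proj1_sig a)).
Proof. unfold gg, hpot, zr. rewrite (q_v1 a). auto. apply clampI_val. unfold inI; lra. Qed.

Lemma pot_e : a = eh -> hpot (d1 (proj1_sig a)) = hpot (d0 (proj1_sig a)) + 1.
Proof.
  intro Ha. rewrite <- gg0, <- gg1.
  assert (E01 : (fun r => gg r - r) 0 = (fun r => gg r - r) 1).
  { apply (int_const (fun r => gg r - r)). apply contI_minus. apply gg_cont.
    intros t0 Ht0 e' He'. exists e'. split; [exact He'|]. intros t1 _ Ht1. exact Ht1.
    intros t Ht. eapply zeq_trans. apply gg_zeq; auto. unfold zr. rewrite Ha.
    eapply zeq_trans. apply uu_e. rewrite clampI_val by auto. exists 0%Z. simpl. ring. }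
  simpl in E01. lra.
Qed.

Lemma pot_ne : a <> eh -> hpot (d1 (proj1_sig a)) = hpot (d0 (proj1_sig a)).
Proof.
  intro Ha. rewrite <- gg0, <- gg1. symmetry. apply int_const. apply gg_cont.
  intros t Ht. destruct (zeq_trans _ _ _ (gg_zeq t Ht) (uu_ne a _ Ha)) as [k Hk].
  exists k. lra.
Qed.
End Edge.
End Pot.

End Tree.


Section Walks.
Variables (V0 E : Type) (d0 d1 : E -> V0) (T : E -> Prop).
Variables (M : Type) (s t : M -> V0) (comp : M -> M -> M) (idm : V0 -> M) (inv : M -> M)
  (sigma : E -> M).
Hypothesis Hid : forall x, s (idm x) = x /\ t (idm x) = x.
Hypothesis Hcomp : forall f g, t f = s g -> s (comp f g) = s f /\ t (comp f g) = t g.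
Hypothesis Hassoc : forall f g h, t f = s g -> t g = s h -> comp (comp f g) h = comp f (comp g h).
Hypothesis Hunit : forall f, comp (idm (s f)) f = f /\ comp f (idm (t f)) = f.
Hypothesis Hinv : forall f, s (inv f) = t f /\ t (inv f) = s f /\
             comp f (inv f) = idm (s f) /\ comp (inv f) f = idm (t f).
Hypothesis Hsig : forall a, s (sigma a) = d0 a /\ t (sigma a) = d1 a.

Definition dm (d : E * bool) : M := if snd d then sigma (fst d) else inv (sigma (fst d)).
Lemma dm_st d : s (dm d) = dsrc d0 d1 d /\ t (dm d) = dtgt d0 d1 d.
Proof. destruct d as [a []]; unfold dm, dsrc, dtgt; simpl.
  apply Hsig. destruct (Hinv (sigma a)) as [H1 [H2 _]]. rewrite H1, H2. split; apply Hsig. Qed.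

Fixpoint prodw (x : V0) (l : list (E * bool)) : M :=
  match l with nil => idm x | d :: l' => comp (dm d) (prodw (dtgt d0 d1 d) l') end.

Lemma prodw_st x y l : walk T d0 d1 x y l -> s (prodw x l) = x /\ t (prodw x l) = y.
Proof.
  revert x. induction l as [|d l IH]; simpl; intros x Hw.
  - subst. apply Hid.
  - destruct Hw as [_ [Hs Hw]]. destruct (IH _ Hw) as [H1 H2].
    destruct (dm_st d) as [D1 D2].
    rewrite (proj1 (Hcomp _ _ (eq_trans D2 (eq_sym H1)))), (proj2 (Hcomp _ _ (eq_trans D2 (eq_sym H1)))).
    split; congruence.
Qed.

Lemma prodw_app x y z l1 l2 : walk T d0 d1 x y l1 -> walk T d0 d1 y z l2 ->
  prodw x (l1 ++ l2) = comp (prodw x l1) (prodw y l2).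
Proof.
  revert x. induction l1 as [|d l IH]; simpl; intros x H1 H2.
  - subst. destruct (prodw_st _ _ _ H2) as [S1 _]. rewrite <- S1 at 2. symmetry. apply Hunit.
  - destruct H1 as [_ [Hs Hw]]. rewrite (IH _ Hw H2).
    destruct (prodw_st _ _ _ Hw) as [P1 P2]. destruct (prodw_st _ _ _ H2) as [Q1 Q2].
    destruct (dm_st d) as [D1 D2].
    symmetry. apply Hassoc; congruence.
Qed.


Definition flipd (d : E * bool) : E * bool := (fst d, negb (snd d)).
Definition revw (l : list (E * bool)) := rev (map flipd l).

Lemma walk_rev x y l : walk T d0 d1 x y l -> walk T d0 d1 y x (revw l).
Proof.
  revert x. induction l as [|d l IH]; simpl; intros x Hw.
  - subst. simpl. auto.
  - destruct Hw as [HT [Hs Hw]]. unfold revw. simpl. eapply walk_app. apply IH. exact Hw.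
    destruct d as [a []]; unfold dsrc, dtgt in *; simpl in *; repeat split; auto.
Qed.

Lemma prod_rev x y l : walk T d0 d1 x y l -> comp (prodw x l) (prodw y (revw l)) = idm x.
Proof.
  revert x. induction l as [|d l IH]; simpl; intros x Hw.
  - subst y. unfold revw. simpl. pattern x at 1. rewrite <- (proj1 (Hid x)). apply Hunit.
  - destruct Hw as [HT [Hs Hw]]. set (w := dtgt d0 d1 d) in *.
    assert (Wr : walk T d0 d1 y w (revw l)) by (apply walk_rev; auto).
    assert (Wf : walk T d0 d1 w x (flipd d :: nil)).
    { unfold w in *. destruct d as [a []]; unfold dsrc, dtgt in *; simpl in *; repeat split; auto. }
    unfold revw. simpl. fold (revw l). rewrite (prodw_app _ _ _ _ _ Wr Wf). simpl.
    destruct (prodw_st _ _ _ Hw) as [P1 P2]. destruct (prodw_st _ _ _ Wr) as [R1 R2].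
    destruct (dm_st d) as [D1 D2]. destruct (dm_st (flipd d)) as [F1 F2]. fold w in D2.
    assert (F1' : s (dm (flipd d)) = w) by (rewrite F1; unfold w, dsrc, dtgt, flipd; simpl; destruct (snd d); auto).
    assert (F2' : t (dm (flipd d)) = x) by (rewrite F2, <- Hs; unfold dsrc, dtgt, flipd; simpl; destruct (snd d); auto).
    replace (dtgt d0 d1 (flipd d)) with x by (rewrite <- F2'; auto).
    replace (comp (dm (flipd d)) (idm x)) with (dm (flipd d)) by (rewrite <- F2'; symmetry; apply Hunit).
    pose proof (IH _ Hw) as IH'.
    assert (HRF : s (comp (prodw y (revw l)) (dm (flipd d))) = y).
    { rewrite (proj1 (Hcomp _ _ (eq_trans R2 (eq_sym F1')))). auto. }
    rewrite Hassoc; [| congruence | congruence].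
    rewrite <- (Hassoc (prodw w l)); [| congruence | congruence].
    rewrite IH'. rewrite <- F1'. rewrite (proj1 (Hunit _)).
    assert (Hdf : comp (dm d) (dm (flipd d)) = idm (s (dm d))).
    { unfold dm, flipd. simpl. destruct (snd d); simpl.
      apply Hinv. rewrite (proj2 (proj2 (proj2 (Hinv _)))). f_equal.
      destruct (Hinv (sigma (fst d))) as [I1 _]. congruence. }
    rewrite Hdf. rewrite D1. exact (f_equal idm Hs).
Qed.

Section Closed.
Hypothesis Hpot : forall e, T e -> exists h : V0 -> R, forall a, T a ->
  (a = e -> h (d1 a) = h (d0 a) + 1) /\ (a <> e -> h (d1 a) = h (d0 a)).

Lemma split_first (e : E) (l : list (E * bool)) :
  (forall d, In d l -> fst d <> e) \/
  exists m d r, l = m ++ d :: r /\ fst d = e /\ (forall d', In d' m -> fst d' <> e).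
Proof.
  induction l as [|d l IH].
  - left. intros d [].
  - destruct (classic (fst d = e)) as [He|He].
    + right. exists nil, d, l. simpl. repeat split; auto.
    + destruct IH as [IH|[m [d' [r [-> [H1 H2]]]]]].
      * left. intros d' [<-|Hd]; auto.
      * right. exists (d :: m), d', r. simpl. repeat split; auto. intros d'' [<-|Hd]; auto.
Qed.

Lemma walk_split x z m d r : walk T d0 d1 x z (m ++ d :: r) ->
  walk T d0 d1 x (dsrc d0 d1 d) m /\ walk T d0 d1 (dsrc d0 d1 d) z (d :: r).
Proof.
  revert x. induction m as [|d' m IH]; simpl; intros x Hw.
  - destruct Hw as [H1 [H2 H3]]. split; auto.
  - destruct Hw as [H1 [H2 H3]]. destruct (IH _ H3). split; auto.
Qed.

Lemma walk_h (e : E) (h : V0 -> R) (Hh : forall a, T a -> a <> e -> h (d1 a) = h (d0 a))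
  x y m : walk T d0 d1 x y m -> (forall d, In d m -> fst d <> e) -> h y = h x.
Proof.
  revert x. induction m as [|d m IH]; simpl; intros x Hw Hn.
  - subst; auto.
  - destruct Hw as [HT [Hs Hw]]. rewrite (IH _ Hw). 2:{ intros; apply Hn; auto. }
    subst x. unfold dsrc, dtgt. specialize (Hh _ HT (Hn d (or_introl eq_refl))).
    destruct (snd d); auto.
Qed.

Lemma closed_walk : forall n l x, (length l <= n)%nat -> walk T d0 d1 x x l -> prodw x l = idm x.
Proof.
  induction n as [|n IH]; intros l x Hlen Hw.
  - destruct l; simpl in *; [auto|lia].
  - destruct l as [|d l']. reflexivity.
    simpl in Hw. destruct Hw as [HTe [Hsrc Hw]].
    destruct (Hpot _ HTe) as [h Hh].
    assert (Hne : forall a, T a -> a <> fst d -> h (d1 a) = h (d0 a)) by (intros; apply Hh; auto).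
    assert (He1 : h (d1 (fst d)) = h (d0 (fst d)) + 1) by (apply Hh; auto).
    destruct (split_first (fst d) l') as [Hno|[m [d' [r [Hl [Hd' Hm]]]]]].
    + exfalso. pose proof (walk_h _ h Hne _ _ _ Hw Hno). subst x.
      unfold dsrc, dtgt in *. destruct (snd d); lra.
    + subst l'. destruct (walk_split _ _ _ _ _ Hw) as [Wm Wr].
      pose proof (walk_h _ h Hne _ _ _ Wm Hm) as Hhm.
      simpl in Wr. destruct Wr as [_ [_ Wr]].
      assert (Hw' : dsrc d0 d1 d' = dtgt d0 d1 d /\ snd d' = negb (snd d)).
      { unfold dsrc, dtgt in *. rewrite Hd' in *.
        destruct (snd d), (snd d'); simpl; auto; rewrite Hhm in He1 || rewrite <- Hhm in He1; lra. }
      destruct Hw' as [Hw1 Hw2].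
      rewrite Hw1 in Wm.
      assert (Wdr : walk T d0 d1 (dtgt d0 d1 d) x (d' :: r)).
      { simpl. rewrite Hd'. auto. }
      simpl. rewrite (prodw_app _ _ _ _ _ Wm Wdr).
      simpl in Hlen. rewrite length_app in Hlen. simpl in Hlen.
      rewrite (IH m) by (auto; lia).
      assert (Hdtgt : dtgt d0 d1 d' = x).
      { rewrite <- Hsrc. unfold dtgt, dsrc in *. rewrite Hw2, Hd'. destruct (snd d); auto. }
      simpl. rewrite Hdtgt in Wr |- *.
      rewrite (IH r x) by (auto; lia).
      destruct (dm_st d') as [S' T'].
      replace (comp (dm d') (idm x)) with (dm d')
        by (rewrite <- Hdtgt, <- T'; symmetry; apply Hunit).
      replace (comp (idm (dtgt d0 d1 d)) (dm d')) with (dm d')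
        by (rewrite <- Hw1, <- S'; symmetry; apply Hunit).
      unfold dm. rewrite Hw2, Hd'. rewrite <- Hsrc. unfold dsrc.
      destruct (snd d); simpl; [rewrite (proj1 (proj2 (proj2 (Hinv _)))); f_equal; apply Hsig|rewrite (proj2 (proj2 (proj2 (Hinv _)))); f_equal; apply Hsig].
Qed.

Lemma walk_unique x y l1 l2 : walk T d0 d1 x y l1 -> walk T d0 d1 x y l2 ->
  prodw x l1 = prodw x l2.
Proof.
  intros W1 W2.
  assert (Wr : walk T d0 d1 y x (revw l2)) by (apply walk_rev; auto).
  assert (C1 : comp (prodw x l1) (prodw y (revw l2)) = idm x).
  { rewrite <- (prodw_app _ _ _ _ _ W1 Wr). eapply closed_walk. apply le_n. eapply walk_app; eauto. }
  pose proof (prod_rev _ _ _ W2) as C2.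
  destruct (prodw_st _ _ _ W1) as [A1 A2]. destruct (prodw_st _ _ _ W2) as [B1 B2].
  destruct (prodw_st _ _ _ Wr) as [R1 R2].
  set (R := prodw y (revw l2)) in *.
  assert (K : forall P, t P = y -> P = comp (comp P R) (inv R)).
  { intros P HP. rewrite Hassoc. rewrite (proj1 (proj2 (proj2 (Hinv R)))). rewrite R1, <- HP.
    symmetry. apply Hunit. congruence. destruct (Hinv R). congruence. }
  rewrite (K _ A2), (K _ B2), C1, C2. auto.
Qed.

End Closed.
End Walks.


Lemma open_ext {X} (O : Opens X) U U' : O U -> (forall x, U x <-> U' x) -> O U'.
Proof. intros H E. replace U' with U; auto. extensionality x. apply propositional_extensionality. apply E. Qed.

Lemma loc_open {X} (O : Opens X) (HO : is_topology O) (P : X -> Prop) :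
  (forall x, P x -> exists S, O S /\ S x /\ forall y, S y -> P y) -> O P.
Proof.
  intro H. destruct HO as [_ [_ Hu]].
  apply (open_ext O (fun x => exists U, (O U /\ forall y, U y -> P y) /\ U x)).
  - apply Hu. intros U [HU _]. auto.
  - intro x. split. intros [U [[_ HU] Hx]]. auto.
    intro Hx. destruct (H x Hx) as [S [HS [Sx HSP]]]. exists S. auto.
Qed.

Lemma open_full {X} (O : Opens X) : is_topology O -> O (fun _ => True).
Proof. intros [H _]. exact H. Qed.
Lemma open_inter {X} (O : Opens X) U V : is_topology O -> O U -> O V -> O (fun x => U x /\ V x).
Proof. intros [_ [H _]]. apply H. Qed.
Lemma open_empty {X} (O : Opens X) : is_topology O -> O (fun _ => False).
Proof.
  intros [_ [_ Hu]]. apply (open_ext O (fun x => exists U, False /\ U x)).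
  apply Hu. intros U []. intro x. split. intros [U [[] _]]. intros [].
Qed.

Lemma cont_comp {X Y Z} (OX : Opens X) (OY : Opens Y) (OZ : Opens Z) f g :
  continuous OX OY f -> continuous OY OZ g -> continuous OX OZ (fun x => g (f x)).
Proof. intros Hf Hg V HV. apply (Hf _ (Hg V HV)). Qed.

Lemma cont_disc {X Y Z} (OX : Opens X) (OZ : Opens Z) (f : X -> Y) (h : Y -> Z) :
  continuous OX (@discrete_open Y) f -> continuous OX OZ (fun x => h (f x)).
Proof. intros Hf. apply (cont_comp _ _ _ f h Hf). intros V _. exact I. Qed.

Lemma cont_val {X} (OX : Opens X) (P : X -> Prop) : continuous (sub_open OX P) OX (@proj1_sig X P).
Proof. intros V HV. exists V. split; auto. intro; tauto. Qed.

Lemma cont_into_sub {X Y} (OX : Opens X) (OY : Opens Y) (P : Y -> Prop) (f : X -> {y | P y}) :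
  continuous OX OY (fun x => proj1_sig (f x)) -> continuous OX (sub_open OY P) f.
Proof.
  intros Hf W [U [HU HW]]. apply (open_ext _ _ _ (Hf U HU)). intro x. symmetry. apply HW.
Qed.

Lemma cont_pair {X M O : Type} (OX : Opens X) (HX : is_topology OX) (OM : Opens M)
  (s t : M -> O) (comp : M -> M -> M)
  (Hcc : continuous (sub_open (prod_open OM OM) (fun p => t (fst p) = s (snd p))) OM
             (fun p => comp (fst (proj1_sig p)) (snd (proj1_sig p))))
  (f1 f2 : X -> M) : continuous OX OM f1 -> continuous OX OM f2 ->
  (forall x, t (f1 x) = s (f2 x)) -> continuous OX OM (fun x => comp (f1 x) (f2 x)).
Proof.
  intros H1 H2 Hst V HV. destruct (Hcc V HV) as [U [HU HUV]].
  apply loc_open; auto. intros x Hx.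
  pose (z := exist (fun p => t (fst p) = s (snd p)) (f1 x, f2 x) (Hst x)).
  assert (Uz : U (f1 x, f2 x)) by (apply (HUV z); exact Hx).
  destruct (HU _ Uz) as [A [B [HA [HB [Ax [Bx Hall]]]]]].
  exists (fun y => A (f1 y) /\ B (f2 y)). split; [|split].
  - apply open_inter; auto.
  - simpl in *. auto.
  - intros y [Ay By]. apply (HUV (exist _ (f1 y, f2 y) (Hst y))). simpl. apply Hall; auto.
Qed.


Section Main.
Variables (V0 E : Type) (OE : Opens E) (d0 d1 : E -> V0).
Hypothesis Hgraph : is_topgraph OE d0 d1.
Variables (T : E -> Prop).
Hypothesis HT : maximal_tree OE d0 d1 T.
Variable (v : V0).
Variables (M : Type) (OM : Opens M) (s t : M -> V0) (comp : M -> M -> M)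
  (idm : V0 -> M) (inv : M -> M) (sigma : E -> M).
Hypothesis Hfree : is_free_topgroupoid OE d0 d1 OM s t comp idm inv sigma.

Lemma HG : is_topgroupoid OM s t comp idm inv.
Proof. apply Hfree. Qed.
Lemma Hid : forall x, s (idm x) = x /\ t (idm x) = x.
Proof. apply HG. Qed.
Lemma Hcomp : forall f g, t f = s g -> s (comp f g) = s f /\ t (comp f g) = t g.
Proof. apply HG. Qed.
Lemma Hassoc : forall f g h, t f = s g -> t g = s h -> comp (comp f g) h = comp f (comp g h).
Proof. apply HG. Qed.
Lemma Hunit : forall f, comp (idm (s f)) f = f /\ comp f (idm (t f)) = f.
Proof. apply HG. Qed.
Lemma Hinv : forall f, s (inv f) = t f /\ t (inv f) = s f /\
             comp f (inv f) = idm (s f) /\ comp (inv f) f = idm (t f).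
Proof. apply HG. Qed.
Lemma Hsig : forall a, s (sigma a) = d0 a /\ t (sigma a) = d1 a.
Proof. apply Hfree. Qed.

Lemma Hpot : forall e, T e -> exists h : V0 -> R, forall a, T a ->
  (a = e -> h (d1 a) = h (d0 a) + 1) /\ (a <> e -> h (d1 a) = h (d0 a)).
Proof.
  intros e He. destruct HT as [Hdisc [QT [OT [qT [Hreal [x0 [H [HHc Hends]]]]]]]].
  exists (hpot V0 E T QT qT x0 H e He). intros a Ha. split.
  - intros ->.
    exact (pot_e V0 E OE d0 d1 T Hdisc QT OT qT Hreal x0 H HHc Hends e He (exist _ e Ha)
             (f_equal (exist _ e) (proof_irrelevance _ Ha He))).
  - intro Hne.
    refine (pot_ne V0 E OE d0 d1 T Hdisc QT OT qT Hreal x0 H HHc Hends e He (exist _ a Ha) _).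
    intro Heq. injection Heq. auto.
Qed.

Lemma Hconn : forall x, exists l, walk T d0 d1 v x l.
Proof.
  destruct HT as [Hdisc [QT [OT [qT [Hreal [x0 [H [HHc Hends]]]]]]]].
  exact (tree_connected V0 E OE d0 d1 T Hdisc QT OT qT Hreal x0 H HHc Hends v).
Qed.

Let pw := prodw V0 E d0 d1 M comp idm inv sigma.

Definition tau (x : V0) : M := pw v (proj1_sig (constructive_indefinite_description _ (Hconn x))).

Lemma tau_walk x l : walk T d0 d1 v x l -> tau x = pw v l.
Proof.
  intro Hl. unfold tau. destruct (constructive_indefinite_description _ (Hconn x)) as [l0 Hl0].
  simpl. eapply walk_unique; eauto using Hid, Hcomp, Hassoc, Hunit, Hinv, Hsig, Hpot.
Qed.

Lemma tau_st x : s (tau x) = v /\ t (tau x) = x.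
Proof.
  unfold tau. destruct (constructive_indefinite_description _ (Hconn x)) as [l0 Hl0].
  simpl. eapply prodw_st; eauto using Hid, Hcomp, Hassoc, Hunit, Hinv, Hsig.
Qed.

Lemma tau_v : tau v = idm v.
Proof. apply (tau_walk v nil). simpl. auto. Qed.

Lemma tau_edge a : T a -> tau (d1 a) = comp (tau (d0 a)) (sigma a).
Proof.
  intro Ha. destruct (Hconn (d0 a)) as [l Hl].
  assert (Hw : walk T d0 d1 (d0 a) (d1 a) ((a, true) :: nil)) by (simpl; auto).
  rewrite (tau_walk _ (l ++ (a, true) :: nil)) by (eapply walk_app; eauto).
  unfold pw. rewrite (prodw_app _ _ _ _ T _ _ _ _ _ _ _ Hid Hcomp Hassoc Hunit Hinv Hsig _ _ _ _ _ Hl Hw).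
  rewrite (tau_walk _ l Hl). simpl. unfold dm, dtgt. simpl. f_equal.
  destruct (Hsig a) as [_ H2]. rewrite <- H2. apply Hunit.
Qed.

Lemma walk_prop (Pm : M -> Prop) :
  (forall x, Pm (idm x)) -> (forall a, T a -> Pm (sigma a)) -> (forall a, T a -> Pm (inv (sigma a))) ->
  (forall f g, t f = s g -> Pm f -> Pm g -> Pm (comp f g)) -> forall l x y, walk T d0 d1 x y l -> Pm (pw x l).
Proof.
  intros H1 H2 H3 H4. induction l as [|d l IH]; intros x y Hw; simpl.
  - apply H1.
  - destruct Hw as [HTd [_ Hw]]. apply H4.
    + destruct (dm_st V0 E d0 d1 M s t comp idm inv sigma Hinv Hsig d) as [_ D2]. rewrite D2.
      symmetry. eapply (prodw_st V0 E d0 d1 T M s t comp idm inv sigma Hid Hcomp Hinv Hsig). exact Hw.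
    + unfold dm. destruct (snd d); auto.
    + eapply IH; eauto.
Qed.

Lemma tau_prop (Pm : M -> Prop) :
  (forall x, Pm (idm x)) -> (forall a, T a -> Pm (sigma a)) -> (forall a, T a -> Pm (inv (sigma a))) ->
  (forall f g, t f = s g -> Pm f -> Pm g -> Pm (comp f g)) -> forall x, Pm (tau x).
Proof.
  intros H1 H2 H3 H4 x. unfold tau. destruct (constructive_indefinite_description _ (Hconn x)) as [l0 Hl0].
  simpl. eapply walk_prop; eauto.
Qed.

Variables (Q : Type) (OQ : Opens Q) (q : E -> Q).
Hypothesis Hq : is_collapse OE T OQ q.
Variable (star : Q).
Hypothesis Hstar : exists t0, T t0 /\ q t0 = star.
Variables (F : Type) (OF : Opens F) (mulF : F -> F -> F) (invF : F -> F) (eF : F)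
  (sigmaF : Q -> F).
Hypothesis HF : is_free_graev OQ star OF mulF invF eF sigmaF.

Lemma HFg : is_topgroup OF mulF invF eF.
Proof. apply HF. Qed.
Lemma OFtop : is_topology OF.
Proof. apply HFg. Qed.
Lemma Fassoc x y z : mulF (mulF x y) z = mulF x (mulF y z).
Proof. apply HFg. Qed.
Lemma Fl x : mulF eF x = x.
Proof. apply HFg. Qed.
Lemma Fr x : mulF x eF = x.
Proof. apply HFg. Qed.
Lemma Fv x : mulF x (invF x) = eF.
Proof. apply HFg. Qed.
Lemma Fv' x : mulF (invF x) x = eF.
Proof. apply HFg. Qed.

Lemma F_cancel x y : mulF x y = eF -> y = invF x.
Proof.
  intro H. rewrite <- (Fl y), <- (Fv' x), Fassoc, H, Fr. auto.
Qed.

Lemma cont_tt : continuous OF (@discrete_open unit) (fun _ : F => tt).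
Proof.
  intros V _. destruct (classic (V tt)) as [H|H].
  - apply (open_ext _ _ _ (open_full OF OFtop)). intro; tauto.
  - apply (open_ext _ _ _ (open_empty OF OFtop)). intro; tauto.
Qed.

Lemma FG : is_topgroupoid OF (fun _ : F => tt) (fun _ => tt) mulF (fun _ : unit => eF) invF.
Proof.
  destruct HFg as [Htop [Ha [Hu [Hi [Hm Hiv]]]]].
  split; [exact Htop|]. split; [apply cont_tt|]. split; [apply cont_tt|].
  split; [intros []; split; reflexivity|]. split; [intros; split; reflexivity|].
  split; [intros; apply Ha|]. split; [intros; apply Hu|].
  split; [intros f; split; [reflexivity|split; [reflexivity|apply Hi]]|].
  split; [|exact Hiv].
  intros V HV. exists (fun p => V (mulF (fst p) (snd p))). split. apply Hm; auto.
  intro z. tauto.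
Qed.

Lemma q_cont : continuous OE OQ q.
Proof. intros V HV. apply (proj2 (proj1 Hq)). auto. Qed.

Lemma gm_F : graph_morphism OE d0 d1 OF (fun _ : F => tt) (fun _ => tt) (fun _ : V0 => tt)
  (fun a => sigmaF (q a)).
Proof.
  split. apply (cont_comp _ _ _ q sigmaF q_cont). apply HF. auto.
Qed.

Definition PhiEx := proj2 (proj2 Hfree) unit F OF (fun _ => tt) (fun _ => tt) mulF (fun _ => eF) invF
  FG (fun _ => tt) (fun a => sigmaF (q a)) gm_F.
Definition Phi : M -> F := proj1_sig (constructive_indefinite_description _ PhiEx).
Lemma Phi_spec : is_functor s t comp idm (fun _ : F => tt) (fun _ => tt) mulF (fun _ => eF) (fun _ => tt) Phi /\
   continuous OM OF Phi /\ (forall a, Phi (sigma a) = sigmaF (q a)).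
Proof.
  unfold Phi. pose proof (proj2_sig (constructive_indefinite_description _ PhiEx)) as [H1 [H2 [H3 _]]].
  auto.
Qed.
Lemma Phi_comp f g : t f = s g -> Phi (comp f g) = mulF (Phi f) (Phi g).
Proof. apply Phi_spec. Qed.
Lemma Phi_id x : Phi (idm x) = eF.
Proof. apply Phi_spec. Qed.
Lemma Phi_cont : continuous OM OF Phi.
Proof. apply Phi_spec. Qed.
Lemma Phi_sig a : Phi (sigma a) = sigmaF (q a).
Proof. apply Phi_spec. Qed.
Lemma Phi_inv m : Phi (inv m) = invF (Phi m).
Proof.
  apply F_cancel. rewrite <- Phi_comp. rewrite (proj1 (proj2 (proj2 (Hinv m)))). apply Phi_id.
  symmetry. apply Hinv.
Qed.

Lemma Phi_tree a : T a -> Phi (sigma a) = eF.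
Proof.
  intro Ha. rewrite Phi_sig. destruct Hstar as [t0 [Ht0 Hq0]].
  assert (q a = q t0) by (apply (proj2 Hq); auto). rewrite H, Hq0. apply HF.
Qed.

Lemma Phi_tau x : Phi (tau x) = eF.
Proof.
  apply tau_prop.
  - apply Phi_id.
  - apply Phi_tree.
  - intros a Ha. rewrite Phi_inv, Phi_tree by auto. apply eq_sym, F_cancel, Fl.
  - intros f g Hfg Hf Hg. rewrite Phi_comp by auto. rewrite Hf, Hg. apply Fl.
Qed.


Definition Pv (m : M) : Prop := s m = v /\ t m = v.
Definition Mv := {m : M | Pv m}.
Lemma Mv_eq (a b : Mv) : proj1_sig a = proj1_sig b -> a = b.
Proof. destruct a as [a Ha], b as [b Hb]. simpl. intros ->. f_equal. apply proof_irrelevance. Qed.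

Lemma mulV_pf (a b : Mv) : Pv (comp (proj1_sig a) (proj1_sig b)).
Proof.
  destruct a as [a [Ha1 Ha2]], b as [b [Hb1 Hb2]]. simpl.
  destruct (Hcomp a b) as [H1 H2]. congruence. split; congruence.
Qed.
Definition mulV (a b : Mv) : Mv := exist _ _ (mulV_pf a b).
Lemma invV_pf (a : Mv) : Pv (inv (proj1_sig a)).
Proof. destruct a as [a [Ha1 Ha2]]. simpl. destruct (Hinv a) as [H1 [H2 _]]. split; congruence. Qed.
Definition invV (a : Mv) : Mv := exist _ _ (invV_pf a).
Lemma eV_pf : Pv (idm v).
Proof. apply Hid. Qed.
Definition eV : Mv := exist _ _ eV_pf.

Lemma sub_topology {X} (O : Opens X) (P : X -> Prop) : is_topology O -> is_topology (sub_open O P).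
Proof.
  intros [Hf [Hi Hu]]. split; [|split].
  - exists (fun _ => True). split; auto. intro; tauto.
  - intros U V [U' [HU' EU]] [V' [HV' EV]]. exists (fun x => U' x /\ V' x). split. auto.
    intro z. rewrite EU, EV. tauto.
  - intros Fm HFm. exists (fun x => exists U0, (O U0 /\ exists W, Fm W /\ forall z, W z <-> U0 (proj1_sig z)) /\ U0 x).
    split. apply Hu. intros U0 [HU0 _]. auto.
    intro z. split.
    + intros [W [HW Wz]]. destruct (HFm W HW) as [U0 [HU0 E0]]. exists U0. split. split; auto.
      exists W; auto. apply E0; auto.
    + intros [U0 [[HU0 [W [HW E0]]] Hz]]. exists W. split; auto. apply E0; auto.
Qed.

Lemma HtopM : is_topology OM.
Proof. apply HG. Qed.
Lemma Hcc : continuous (sub_open (prod_open OM OM) (fun p => t (fst p) = s (snd p))) OM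
             (fun p => comp (fst (proj1_sig p)) (snd (proj1_sig p))).
Proof. apply HG. Qed.
Lemma Hinvc : continuous OM OM inv.
Proof. apply HG. Qed.

Lemma Mv_group : is_topgroup (sub_open OM Pv) mulV invV eV.
Proof.
  split; [apply sub_topology, HtopM|].
  split; [|split; [|split; [|split]]].
  - intros [x [x1 x2]] [y [y1 y2]] [z [z1 z2]]. apply Mv_eq. simpl. apply Hassoc; congruence.
  - intros [x [x1 x2]]. split; apply Mv_eq; simpl. rewrite <- x1. apply Hunit. rewrite <- x2. apply Hunit.
  - intros [x [x1 x2]]. split; apply Mv_eq; simpl. rewrite <- x1. apply Hinv. rewrite <- x2. apply Hinv.
  - intros W [U0 [HU0 E0]]. intros [a b] Hab. simpl in Hab. apply E0 in Hab. simpl in Hab.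
    destruct (Hcc U0 HU0) as [U1 [HU1 E1]].
    assert (Hst : t (fst (proj1_sig a, proj1_sig b)) = s (snd (proj1_sig a, proj1_sig b))).
    { destruct a as [a [a1 a2]], b as [b [b1 b2]]. simpl. congruence. }
    assert (U1ab : U1 (proj1_sig a, proj1_sig b)) by (apply (E1 (exist _ _ Hst)); exact Hab).
    destruct (HU1 _ U1ab) as [A [B [HA [HB [Aa [Bb Hall]]]]]].
    exists (fun x : Mv => A (proj1_sig x)), (fun x : Mv => B (proj1_sig x)).
    split. exists A; split; auto; intro; tauto.
    split. exists B; split; auto; intro; tauto.
    split; auto. split; auto. intros x y Ax By. apply E0. simpl.
    assert (Hst' : t (fst (proj1_sig x, proj1_sig y)) = s (snd (proj1_sig x, proj1_sig y))).
    { destruct x as [x [x1 x2]], y as [y [y1 y2]]. simpl. congruence. }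
    apply (E1 (exist _ _ Hst')). simpl. apply Hall; auto.
  - apply cont_into_sub. simpl. apply (cont_comp _ _ _ _ inv (cont_val OM Pv) Hinvc).
Qed.

Lemma Hsigc : continuous OE OM sigma.
Proof. apply Hfree. Qed.
Lemma HtopE : is_topology OE.
Proof. apply Hgraph. Qed.

Lemma gE_pf a : Pv (comp (tau (d0 a)) (comp (sigma a) (inv (tau (d1 a))))).
Proof.
  destruct (tau_st (d0 a)) as [A1 A2]. destruct (tau_st (d1 a)) as [B1 B2].
  destruct (Hsig a) as [S1 S2]. destruct (Hinv (tau (d1 a))) as [I1 [I2 _]].
  destruct (Hcomp (sigma a) (inv (tau (d1 a)))) as [C1 C2]. congruence.
  destruct (Hcomp (tau (d0 a)) (comp (sigma a) (inv (tau (d1 a))))) as [D1 D2]. congruence.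
  split; congruence.
Qed.
Definition gE (a : E) : Mv := exist _ _ (gE_pf a).

Lemma gE_tree a : T a -> gE a = eV.
Proof.
  intro Ha. apply Mv_eq. simpl. rewrite (tau_edge a Ha).
  destruct (tau_st (d0 a)) as [A1 A2]. destruct (Hsig a) as [S1 S2].
  destruct (Hcomp (tau (d0 a)) (sigma a)) as [C1 C2]. congruence.
  rewrite <- Hassoc; [rewrite (proj1 (proj2 (proj2 (Hinv _)))); rewrite C1, A1; reflexivity
    | congruence | destruct (Hinv (comp (tau (d0 a)) (sigma a))) as [I1 _]; rewrite I1, C2; reflexivity].
Qed.

Definition g (y : Q) : Mv := gE (proj1_sig (constructive_indefinite_description _ (proj1 (proj1 Hq) y))).
Lemma g_q a : g (q a) = gE a.
Proof.
  unfold g. destruct (constructive_indefinite_description _ (proj1 (proj1 Hq) (q a))) as [a' Ha'].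
  simpl. apply (proj2 Hq) in Ha'. destruct Ha' as [->|[H1 H2]]. auto.
  rewrite !gE_tree; auto.
Qed.

Lemma gE_cont : continuous OE OM (fun a => proj1_sig (gE a)).
Proof.
  simpl. apply (cont_pair OE HtopE OM s t comp Hcc).
  - apply (cont_disc OE OM d0 tau). apply Hgraph.
  - apply (cont_pair OE HtopE OM s t comp Hcc). apply Hsigc.
    apply (cont_disc OE OM d1 (fun x => inv (tau x))). apply Hgraph.
    intro a. destruct (Hsig a) as [_ S2]. destruct (Hinv (tau (d1 a))) as [I1 _].
    rewrite I1, S2. symmetry. apply tau_st.
  - intro a. destruct (tau_st (d0 a)) as [_ A2]. destruct (Hsig a) as [S1 _].
    destruct (Hcomp (sigma a) (inv (tau (d1 a)))) as [C1 _].
    destruct (Hsig a) as [_ S2]. destruct (Hinv (tau (d1 a))) as [I1 _].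
    rewrite I1, S2. symmetry. apply tau_st. congruence.
Qed.

Lemma g_cont : continuous OQ (sub_open OM Pv) g.
Proof.
  apply cont_into_sub. intros V HV. apply (proj2 (proj1 Hq)).
  apply (open_ext _ _ _ (gE_cont V HV)). intro a. rewrite g_q. tauto.
Qed.

Lemma g_star : g star = eV.
Proof. destruct Hstar as [t0 [Ht0 <-]]. rewrite g_q. apply gE_tree; auto. Qed.

Definition PsiEx := proj2 (proj2 (proj2 HF)) Mv (sub_open OM Pv) mulV invV eV Mv_group g g_cont g_star.
Definition psi : F -> Mv := proj1_sig (constructive_indefinite_description _ PsiEx).
Lemma psi_spec : group_hom mulF mulV psi /\ continuous OF (sub_open OM Pv) psi /\
  (forall y, psi (sigmaF y) = g y).
Proof.
  unfold psi. pose proof (proj2_sig (constructive_indefinite_description _ PsiEx)) as [H1 [H2 [H3 _]]].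
  auto.
Qed.


Lemma psi_hom x y : psi (mulF x y) = mulV (psi x) (psi y).
Proof. apply psi_spec. Qed.
Lemma psi_cont : continuous OF (sub_open OM Pv) psi.
Proof. apply psi_spec. Qed.
Lemma psi_sig y : psi (sigmaF y) = g y.
Proof. apply psi_spec. Qed.

Lemma idm_uniq p : s p = v -> t p = v -> comp p p = p -> p = idm v.
Proof.
  intros H1 H2 H3. destruct (Hinv p) as [I1 [I2 [_ I4]]].
  transitivity (comp (comp (inv p) p) p).
  - rewrite I4, H2, <- H1. symmetry; apply Hunit.
  - rewrite Hassoc by congruence. rewrite H3, I4, H2. auto.
Qed.

Lemma psi_e : proj1_sig (psi eF) = idm v.
Proof.
  destruct (psi eF) as [p [H1 H2]] eqn:Ee. simpl. apply idm_uniq; auto.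
  assert (E2 : psi (mulF eF eF) = mulV (psi eF) (psi eF)) by apply psi_hom.
  rewrite Fl, Ee in E2. apply (f_equal (@proj1_sig _ _)) in E2. simpl in E2. auto.
Qed.

Definition Pp (m : M) : M := proj1_sig (psi (Phi m)).
Lemma Pp_st m : s (Pp m) = v /\ t (Pp m) = v.
Proof. unfold Pp. apply (proj2_sig (psi (Phi m))). Qed.

Definition Gm (m : M) : M := comp (inv (tau (s m))) (comp (Pp m) (tau (t m))).

Lemma inv_st m : s (inv m) = t m /\ t (inv m) = s m.
Proof. destruct (Hinv m) as [A [B _]]. auto. Qed.

Lemma Gm_st m : s (Gm m) = s m /\ t (Gm m) = t m.
Proof.
  unfold Gm. destruct (Pp_st m) as [P1 P2]. destruct (tau_st (s m)) as [A1 A2].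
  destruct (tau_st (t m)) as [B1 B2]. destruct (inv_st (tau (s m))) as [I1 I2].
  destruct (Hcomp (Pp m) (tau (t m))) as [C1 C2]. congruence.
  destruct (Hcomp (inv (tau (s m))) (comp (Pp m) (tau (t m)))) as [D1 D2]. congruence.
  split; congruence.
Qed.

Lemma Gm_idm x : Gm (idm x) = idm x.
Proof.
  unfold Gm, Pp. rewrite Phi_id, psi_e. destruct (Hid x) as [H1 H2]. rewrite H1, H2.
  destruct (tau_st x) as [A1 A2]. rewrite <- A1. rewrite (proj1 (Hunit _)).
  rewrite (proj2 (proj2 (proj2 (Hinv _)))). rewrite A2. auto.
Qed.

Lemma Gm_comp f g0 : t f = s g0 -> Gm (comp f g0) = comp (Gm f) (Gm g0).
Proof.
  intro Hfg. destruct (Hcomp f g0 Hfg) as [C1 C2].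
  unfold Gm. rewrite C1, C2.
  assert (HP : Pp (comp f g0) = comp (Pp f) (Pp g0)).
  { unfold Pp. rewrite Phi_comp by auto. rewrite psi_hom. reflexivity. }
  rewrite HP. rewrite <- Hfg.
  destruct (Pp_st f) as [B1 B2]. destruct (Pp_st g0) as [B'1 B'2].
  destruct (tau_st (s f)) as [A1 A2]. destruct (tau_st (t f)) as [Cc1 Cc2].
  destruct (tau_st (t g0)) as [C'1 C'2]. destruct (inv_st (tau (s f))) as [I1 I2].
  destruct (inv_st (tau (t f))) as [J1 J2].
  set (A := inv (tau (s f))) in *. set (B := Pp f) in *. set (Cc := tau (t f)) in *.
  set (B' := Pp g0) in *. set (C' := tau (t g0)) in *.
  assert (Z1 : s (comp B' C') = v) by (rewrite (proj1 (Hcomp B' C' ltac:(congruence))); auto).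
  assert (Z2 : t (comp B' C') = t g0) by (rewrite (proj2 (Hcomp B' C' ltac:(congruence))); auto).
  assert (Y1 : s (comp B Cc) = v) by (rewrite (proj1 (Hcomp B Cc ltac:(congruence))); auto).
  assert (Y2 : t (comp B Cc) = t f) by (rewrite (proj2 (Hcomp B Cc ltac:(congruence))); auto).
  assert (X1 : s (comp (inv Cc) (comp B' C')) = t f) by (rewrite (proj1 (Hcomp (inv Cc) (comp B' C') ltac:(congruence))); congruence).
  rewrite (Hassoc B B' C'); [|congruence|congruence].
  rewrite (Hassoc A (comp B Cc)); [|congruence|congruence].
  rewrite (Hassoc B Cc); [|congruence|congruence].
  rewrite <- (Hassoc Cc (inv Cc)); [|congruence|congruence].
  rewrite (proj1 (proj2 (proj2 (Hinv Cc)))). rewrite Cc1, <- Z1. rewrite (proj1 (Hunit _)). auto.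
Qed.

Lemma Gm_cont : continuous OM OM Gm.
Proof.
  unfold Gm. apply (cont_pair OM HtopM OM s t comp Hcc).
  - apply (cont_disc OM OM s (fun x => inv (tau x))). apply HG.
  - apply (cont_pair OM HtopM OM s t comp Hcc).
    + unfold Pp. apply (cont_comp OM (sub_open OM Pv) OM (fun m => psi (Phi m)) (@proj1_sig _ _)).
      apply (cont_comp _ _ _ Phi psi Phi_cont psi_cont). apply cont_val.
    + apply (cont_disc OM OM t tau). apply HG.
    + intro m. destruct (Pp_st m). destruct (tau_st (t m)). congruence.
  - intro m. destruct (inv_st (tau (s m))) as [_ I2]. rewrite I2.
    destruct (Pp_st m) as [P1 P2]. destruct (tau_st (s m)) as [A1 _].
    destruct (tau_st (t m)) as [B1 _].
    rewrite (proj1 (Hcomp (Pp m) (tau (t m)) ltac:(congruence))). congruence.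
Qed.

Lemma Gm_sig a : Gm (sigma a) = sigma a.
Proof.
  unfold Gm, Pp. rewrite Phi_sig, psi_sig, g_q. simpl.
  destruct (Hsig a) as [S1 S2]. rewrite S1, S2.
  set (t0 := tau (d0 a)). set (t1 := tau (d1 a)).
  destruct (tau_st (d0 a)) as [A1 A2]. destruct (tau_st (d1 a)) as [B1 B2].
  fold t0 in A1, A2. fold t1 in B1, B2.
  destruct (inv_st t1) as [I1 I2]. destruct (inv_st t0) as [J1 J2].
  assert (W1 : s (comp (sigma a) (inv t1)) = d0 a) by (rewrite (proj1 (Hcomp (sigma a) (inv t1) ltac:(congruence))); auto).
  assert (W2 : t (comp (sigma a) (inv t1)) = v) by (rewrite (proj2 (Hcomp (sigma a) (inv t1) ltac:(congruence))); congruence).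
  rewrite (Hassoc t0); [|congruence|congruence].
  rewrite (Hassoc (sigma a)); [|congruence|congruence].
  rewrite (proj2 (proj2 (proj2 (Hinv t1)))). rewrite B2, <- S2. rewrite (proj2 (Hunit _)).
  rewrite <- Hassoc; [|congruence|congruence].
  rewrite (proj2 (proj2 (proj2 (Hinv t0)))). rewrite A2, <- S1. apply Hunit.
Qed.

Lemma Gm_eq m : Gm m = m.
Proof.
  destruct (proj2 (proj2 Hfree) V0 M OM s t comp idm inv HG (fun x => x) sigma (proj1 (proj2 Hfree)))
    as [F0 [_ [_ [_ Huniq]]]].
  rewrite (Huniq Gm), (Huniq (fun m => m)); auto.
  - split; [|split]; intros; auto.
  - intros V HV. exact HV.
  - split; [|split]. apply Gm_st. apply Gm_comp. apply Gm_idm.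
  - apply Gm_cont.
  - apply Gm_sig.
Qed.

Lemma inv_idm x : inv (idm x) = idm x.
Proof.
  destruct (Hinv (idm x)) as [I1 [I2 [I3 _]]]. destruct (Hid x) as [H1 H2].
  assert (E1 : comp (idm (s (inv (idm x)))) (inv (idm x)) = inv (idm x)) by apply Hunit.
  rewrite I1, H2 in E1. rewrite <- E1. rewrite I3, H1. auto.
Qed.

Lemma unit_r m x : t m = x -> comp m (idm x) = m.
Proof. intros <-. apply Hunit. Qed.
Lemma unit_l m x : s m = x -> comp (idm x) m = m.
Proof. intros <-. apply Hunit. Qed.

Lemma main_thm :
  exists (phi : {m : M | s m = v /\ t m = v} -> F)
         (psi : F -> {m : M | s m = v /\ t m = v}),
    (forall a b c : {m : M | s m = v /\ t m = v},
       proj1_sig c = comp (proj1_sig a) (proj1_sig b) ->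
       phi c = mulF (phi a) (phi b)) /\
    (forall a, psi (phi a) = a) /\ (forall y, phi (psi y) = y) /\
    continuous (sub_open OM (fun m => s m = v /\ t m = v)) OF phi /\
    continuous OF (sub_open OM (fun m => s m = v /\ t m = v)) psi.
Proof.
  exists (fun m => Phi (proj1_sig m)), psi.
  split; [|split; [|split; [|split]]].
  - intros [a [a1 a2]] [b [b1 b2]] c Hc. simpl in *. rewrite Hc. apply Phi_comp. congruence.
  - intros [a [a1 a2]]. apply Mv_eq. simpl. pose proof (Gm_eq a) as Hg. unfold Gm in Hg.
    rewrite a1, a2, tau_v, inv_idm in Hg.
    destruct (Pp_st a) as [P1 P2].
    rewrite (unit_r (Pp a) v P2), (unit_l (Pp a) v P1) in Hg. exact Hg.
  - destruct (proj2 (proj2 (proj2 HF)) F OF mulF invF eF HFg sigmaF (proj1 (proj2 HF))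
       (proj1 (proj2 (proj2 HF)))) as [phi0 [_ [_ [_ Huniq]]]].
    intro y. rewrite (Huniq (fun y => Phi (proj1_sig (psi y)))), (Huniq (fun y => y)); auto.
    + intros x1 x2. auto.
    + intros V HV. exact HV.
    + intros x1 x2. rewrite psi_hom. simpl. apply Phi_comp.
      destruct (proj2_sig (psi x1)). destruct (proj2_sig (psi x2)). congruence.
    + apply (cont_comp _ _ _ psi (fun m => Phi (proj1_sig m)) psi_cont).
      apply (cont_comp _ _ _ (@proj1_sig _ _) Phi (cont_val OM Pv) Phi_cont).
    + intro y0. rewrite psi_sig. destruct (proj1 (proj1 Hq) y0) as [a <-]. rewrite g_q. simpl.
      destruct (Hsig a) as [S1 S2]. destruct (tau_st (d0 a)) as [A1 A2].
      destruct (tau_st (d1 a)) as [B1 B2]. destruct (inv_st (tau (d1 a))) as [I1 I2].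
      rewrite Phi_comp, Phi_comp, Phi_inv, !Phi_tau, Phi_sig.
      rewrite Fl. replace (invF eF) with eF. apply Fr. apply F_cancel, Fl.
      congruence.
      rewrite (proj1 (Hcomp (sigma a) (inv (tau (d1 a))) ltac:(congruence))). congruence.
  - apply (cont_comp _ _ _ (@proj1_sig _ _) Phi (cont_val OM Pv) Phi_cont).
  - apply psi_cont.
Qed.

End Main.

Theorem theorem3p6
  (V0 E : Type) (OE : Opens E) (d0 d1 : E -> V0)
  (Hgraph : is_topgraph OE d0 d1)
  (Hconn : graph_connected OE d0 d1)
  (Hmore : exists x y : V0, x <> y)
  (T : E -> Prop) (HT : maximal_tree OE d0 d1 T)
  (v : V0)
  (M : Type) (OM : Opens M) (s t : M -> V0) (comp : M -> M -> M)
  (idm : V0 -> M) (inv : M -> M) (sigma : E -> M)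
  (Hfree : is_free_topgroupoid OE d0 d1 OM s t comp idm inv sigma)
  (Q : Type) (OQ : Opens Q) (q : E -> Q) (Hq : is_collapse OE T OQ q)
  (star : Q) (Hstar : exists t0, T t0 /\ q t0 = star)
  (F : Type) (OF : Opens F) (mulF : F -> F -> F) (invF : F -> F) (eF : F)
  (sigmaF : Q -> F) (HF : is_free_graev OQ star OF mulF invF eF sigmaF) :
  exists (phi : {m : M | s m = v /\ t m = v} -> F)
         (psi : F -> {m : M | s m = v /\ t m = v}),
    (forall a b c : {m : M | s m = v /\ t m = v},
       proj1_sig c = comp (proj1_sig a) (proj1_sig b) ->
       phi c = mulF (phi a) (phi b)) /\
    (forall a, psi (phi a) = a) /\ (forall y, phi (psi y) = y) /\
    continuous (sub_open OM (fun m => s m = v /\ t m = v)) OF phi /\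
    continuous OF (sub_open OM (fun m => s m = v /\ t m = v)) psi.
Proof.
  intros. eapply main_thm; eauto.
Qed.
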